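(* In the setting of the context, fix $\varrho>0$. For $\kappa>0$ big enough there exists a constant $C>0$ independent of $\kappa$ such that, for any $Z\in B(\varrho)$, $$\|\mathcal R_1[Z]\|_{11/3}\le C,\qquad\|\mathcal R_j[Z]\|_{4/3}\le C,\ j=2,3,$$ and $$\|\partial_W\mathcal R_1[Z]\|_3\le C,\quad\|\partial_X\mathcal R_1[Z]\|_{7/3}\le C,\quad\|\partial_Y\mathcal R_1[Z]\|_{7/3}\le C,$$ $$\|\partial_W\mathcal R_j[Z]\|_{2/3}\le C,\quad\|\partial_X\mathcal R_j[Z]\|_2\le C,\quad\|\partial_Y\mathcal R_j[Z]\|_2\le C,\quad j=2,3.$$
   Context: Inner equation: $\mathcal K=-\tfrac34U^{2/3}W^2-\frac1{3U^{2/3}}\big((1+\mathcal J)^{-1/2}-1\big)$ with $\mathcal J=\frac{4W^2}{9U^{2/3}}-\frac{16W}{27U^{4/3}}+\frac{16}{81U^2}+\frac{4(X+Y)}{9U}\big(W-\frac2{3U^{2/3}}\big)-\frac{4i(X-Y)}{3U^{2/3}}-\frac{X^2+Y^2}{3U^{4/3}}+\frac{10XY}{9U^{4/3}}$; $Z=(W,X,Y)$, $\mathcal A=\mathrm{diag}(0,i,-i)$, $f=(-\partial_U\mathcal K,i\partial_Y\mathcal K,-i\partial_X\mathcal K)^T$, $g=\partial_W\mathcal K$. For $U$ and $\zeta=(W,X,Y)$ let $\mathcal R(U,\zeta)=\frac{f(U,\zeta)-g(U,\zeta)\mathcal A\zeta}{1+g(U,\zeta)}$; for a function $\varphi$ of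 $U$, $\mathcal R[\varphi](U)=\mathcal R(U,\varphi(U))$ and $\partial_W\mathcal R_j[\varphi](U)=(\partial_W\mathcal R_j)(U,\varphi(U))$, and similarly for $X,Y$. Fix $\beta_0\in(0,\tfrac\pi2)$; $D^u_\kappa=\{U\in\mathbb C:|\operatorname{Im}U|\ge\tan\beta_0\operatorname{Re}U+\kappa\}$, with fractional powers of $U$ given by a continuous determination of $\arg U$ on $D^u_\kappa$ with $\arg U\in(-\pi,0)$ for $\operatorname{Im}U<0$. $\|\varphi\|_\nu=\sup_{U\in D^u_\kappa}|U^\nu\varphi(U)|$, $\mathcal X_\nu$ the space of analytic $\varphi$ on $D^u_\kappa$ with $\|\varphi\|_\nu<\infty$, $\|\varphi\|_\times=\|\varphi_1\|_{8/3}+\|\varphi_2\|_{4/3}+\|\varphi_3\|_{4/3}$, and $B(\varrho)=\{\varphi\in\mathcal X_{8/3}\times\mathcal X_{4/3}\times\mathcal X_{4/3}:\|\varphi\|_\times\le\varrho\}$. *)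

(* Defs.v *)
From Stdlib Require Import Reals ClassicalEpsilon.
From Coquelicot Require Import Coquelicot.
Open Scope R_scope.

(* The continuous determination of arg U on D^u_kappa (which avoids [0,+oo))
   with arg U in (-pi,0) when Im U < 0; it takes values in (-2pi,0). *)
Definition argD (U : C) : R :=
  if Rlt_dec (Im U) 0 then - acos (Re U / Cmod U)
  else acos (Re U / Cmod U) - 2 * PI.

Definition cpowD (U : C) (nu : R) : C :=
  (RtoC (Rpower (Cmod U) nu) * (RtoC (cos (nu * argD U)) + Ci * RtoC (sin (nu * argD U))))%C.

(* principal argument in (-pi, pi] and principal power (used for (1+J)^{-1/2}) *)
Definition argP (w : C) : R :=
  if Rlt_dec (Im w) 0 then - acos (Re w / Cmod w) else acos (Re w / Cmod w).

Definition cpowP (w : C) (nu : R) : C :=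
  (RtoC (Rpower (Cmod w) nu) * (RtoC (cos (nu * argP w)) + Ci * RtoC (sin (nu * argP w))))%C.

(* the complex derivative of f at z (a chosen value l with is_derive f z l;
   arbitrary if f is not complex differentiable at z) *)
Definition Cderiv (f : C -> C) (z : C) : C :=
  epsilon (inhabits (RtoC 0)) (fun l : C => @is_derive C_AbsRing C_NormedModule f z l).

Definition Holo_at (f : C -> C) (z : C) : Prop :=
  @ex_derive C_AbsRing C_NormedModule f z.

Definition dU (F : C -> C -> C -> C -> C) U W X Y := Cderiv (fun u => F u W X Y) U.
Definition dW (F : C -> C -> C -> C -> C) U W X Y := Cderiv (fun w => F U w X Y) W.
Definition dX (F : C -> C -> C -> C -> C) U W X Y := Cderiv (fun x => F U W x Y) X.
Definition dY (F : C -> C -> C -> C -> C) U W X Y := Cderiv (fun y => F U W X y) Y.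

Local Open Scope C_scope.

Definition Jfun (U W X Y : C) : C :=
  RtoC (4/9) * W * W / cpowD U (2/3)
  - RtoC (16/27) * W / cpowD U (4/3)
  + RtoC (16/81) / (U * U)
  + RtoC (4/9) * (X + Y) / U * (W - RtoC (2/3) / cpowD U (2/3))
  - RtoC 4 * Ci * (X - Y) / (RtoC 3 * cpowD U (2/3))
  - (X * X + Y * Y) / (RtoC 3 * cpowD U (4/3))
  + RtoC (10/9) * X * Y / cpowD U (4/3).

Definition Kfun (U W X Y : C) : C :=
  - RtoC (3/4) * cpowD U (2/3) * W * W
  - RtoC 1 / (RtoC 3 * cpowD U (2/3))
      * (cpowP (RtoC 1 + Jfun U W X Y) (-1/2) - RtoC 1).

(* f = (-dU K, i dY K, -i dX K), g = dW K *)
Definition gfun (U W X Y : C) : C := dW Kfun U W X Y.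

(* components of R(U, zeta) with zeta = (W,X,Y), A = diag(0,i,-i) *)
Definition Rc1 (U W X Y : C) : C :=
  (- dU Kfun U W X Y - gfun U W X Y * RtoC 0) / (RtoC 1 + gfun U W X Y).
Definition Rc2 (U W X Y : C) : C :=
  (Ci * dY Kfun U W X Y - gfun U W X Y * (Ci * X)) / (RtoC 1 + gfun U W X Y).
Definition Rc3 (U W X Y : C) : C :=
  (- Ci * dX Kfun U W X Y - gfun U W X Y * (- Ci * Y)) / (RtoC 1 + gfun U W X Y).

Local Close Scope C_scope.

Definition inD (beta0 kappa : R) (U : C) : Prop :=
  Rabs (Im U) >= tan beta0 * Re U + kappa.

Definition wnorm (beta0 kappa nu : R) (phi : C -> C) : Rbar :=
  Lub_Rbar (fun r => exists U, inD beta0 kappa U /\ r = Cmod (cpowD U nu * phi U)%C).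

Definition in_Xnu (beta0 kappa nu : R) (phi : C -> C) : Prop :=
  (forall U, inD beta0 kappa U -> Holo_at phi U) /\ is_finite (wnorm beta0 kappa nu phi).

Definition in_ball (beta0 kappa rho : R) (Z1 Z2 Z3 : C -> C) : Prop :=
  in_Xnu beta0 kappa (8/3) Z1 /\ in_Xnu beta0 kappa (4/3) Z2 /\ in_Xnu beta0 kappa (4/3) Z3 /\
  real (wnorm beta0 kappa (8/3) Z1) + real (wnorm beta0 kappa (4/3) Z2)
    + real (wnorm beta0 kappa (4/3) Z3) <= rho.

Definition eval_on (F : C -> C -> C -> C -> C) (Z1 Z2 Z3 : C -> C) : C -> C :=
  fun U => F U (Z1 U) (Z2 U) (Z3 U).

(* Main.v *)
Require Import Defs.
From Stdlib Require Import Reals ClassicalEpsilon Lra ZArith Lia.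
From Coquelicot Require Import Coquelicot.
Open Scope R_scope.

Local Open Scope C_scope.

Definition contC (f : C -> C) (x : C) : Prop :=
  forall eps : R, 0 < eps -> exists del : R, 0 < del /\
    forall y, Cmod (y - x) < del -> Cmod (f y - f x) < eps.

Lemma Cmod_sub_sym (a b : C) : Cmod (a - b) = Cmod (b - a).
Proof. replace (a - b) with (- (b - a)) by ring. apply Cmod_opp. Qed.

Lemma carath (f q : C -> C) (x : C) (d : R) : 0 < d ->
  (forall y, Cmod (y - x) < d -> f y - f x = (y - x) * q y) ->
  contC q x -> is_derive f x (q x).
Proof.
  intros Hd Hf Hq. split. apply is_linear_scal_l.
  intros x0 Hx0. apply (@is_filter_lim_locally_unique C_AbsRing (AbsRing_NormedModule C_AbsRing)) in Hx0. subst x0.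
  intros eps. destruct (Hq eps (cond_pos eps)) as [del [Hdel Hy]].
  assert (Hm : 0 < Rmin d del) by (apply Rmin_case; lra).
  exists (mkposreal _ Hm). intros y Hy'. change (Cmod (y - x) < Rmin d del) in Hy'.
  change (Cmod ((f y - f x) - (y - x) * q x) <= eps * Cmod (y - x)).
  rewrite Hf. 2:{ eapply Rlt_le_trans. apply Hy'. apply Rmin_l. }
  replace ((y - x) * q y - (y - x) * q x) with ((y - x) * (q y - q x)) by ring.
  rewrite Cmod_mult. rewrite Rmult_comm. apply Rmult_le_compat_r. apply Cmod_ge_0.
  left. apply Hy. eapply Rlt_le_trans. apply Hy'. apply Rmin_r.
Qed.

Lemma contC_of_derive (g : C -> C) (z l : C) : is_derive g z l -> contC g z.
Proof.
  intros [_ H]. specialize (H z (fun P HP => HP)). 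
  destruct (H (mkposreal 1 Rlt_0_1)) as [e0 He0].
  intros eps Heps.
  assert (Hl : 0 < 1 + Cmod l) by (generalize (Cmod_ge_0 l); lra).
  exists (Rmin e0 (eps / (1 + Cmod l))). split.
  { apply Rmin_case. apply cond_pos. apply Rdiv_lt_0_compat; lra. }
  intros y Hy. specialize (He0 y).
  assert (Hy1 : Cmod (y - z) < e0) by (eapply Rlt_le_trans; [apply Hy| apply Rmin_l]).
  assert (Hy2 : Cmod (y - z) < eps / (1 + Cmod l)) by (eapply Rlt_le_trans; [apply Hy| apply Rmin_r]).
  specialize (He0 Hy1). change (Cmod ((g y - g z) - (y - z) * l) <= 1 * Cmod (y - z)) in He0.
  replace (g y - g z) with (((g y - g z) - (y - z) * l) + (y - z) * l) by ring.
  eapply Rle_lt_trans. apply Cmod_triangle. rewrite Cmod_mult.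
  apply Rlt_div_r in Hy2; [|lra].
  generalize (Cmod_ge_0 l) (Cmod_ge_0 (y - z)); nra.
Qed.

Lemma conv1 (f : C -> C) x l : @is_derive C_AbsRing C_NormedModule f x l -> @is_derive C_AbsRing (AbsRing_NormedModule C_AbsRing) f x l.
Proof. intros [H1 H2]. split.
 - apply is_linear_scal_l.
 - intros x0 Hx e. specialize (H2 x0 Hx e). exact H2.
Qed.
Lemma conv2 (f : C -> C) x l : @is_derive C_AbsRing (AbsRing_NormedModule C_AbsRing) f x l -> @is_derive C_AbsRing C_NormedModule f x l.
Proof. intros [H1 H2]. split.
 - apply is_linear_scal_l.
 - intros x0 Hx e. specialize (H2 x0 Hx e). exact H2.
Qed.

Lemma D_plus (f g : C -> C) x a b : is_derive f x a -> is_derive g x b ->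
  is_derive (fun t => f t + g t) x (a + b).
Proof. intros. apply (@is_derive_plus C_AbsRing C_NormedModule); auto. Qed.
Lemma D_minus (f g : C -> C) x a b : is_derive f x a -> is_derive g x b ->
  is_derive (fun t => f t - g t) x (a - b).
Proof. intros. apply (@is_derive_minus C_AbsRing C_NormedModule); auto. Qed.
Lemma D_opp (f : C -> C) x a : is_derive f x a ->
  is_derive (fun t => - f t) x (- a).
Proof. intros. apply (@is_derive_opp C_AbsRing C_NormedModule); auto. Qed.
Lemma D_mult (f g : C -> C) x a b : is_derive f x a -> is_derive g x b ->
  is_derive (fun t => f t * g t) x (a * g x + f x * b).
Proof. intros. apply conv2. exact (@is_derive_mult C_AbsRing f g x a b (conv1 _ _ _ H) (conv1 _ _ _ H0) Cmult_comm). Qed.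
Lemma D_const (c : C) x : is_derive (fun _ => c) x (RtoC 0).
Proof. apply (@is_derive_const C_AbsRing C_NormedModule). Qed.
Lemma D_id x : is_derive (fun t : C => t) x (RtoC 1).
Proof. apply conv2. apply (@is_derive_id C_AbsRing). Qed.
Lemma D_comp (f g : C -> C) x a b : is_derive f (g x) a -> is_derive g x b ->
  is_derive (fun t => f (g t)) x (b * a).
Proof. intros. apply conv2. apply (@is_derive_comp C_AbsRing (AbsRing_NormedModule C_AbsRing)); apply conv1; auto. Qed.

Lemma contC_inv (x : C) : x <> 0 -> contC Cinv x.
Proof.
  intros Hx eps Heps. apply Cmod_gt_0 in Hx as Hm.
  exists (Rmin (Cmod x / 2) (eps * (Cmod x * Cmod x) / 2)). split.
  { apply Rmin_case. lra. apply Rdiv_lt_0_compat; [|lra]. apply Rmult_lt_0_compat; [lra|]. apply Rmult_lt_0_compat; lra. }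
  intros y Hy.
  assert (Hy1 : Cmod (y - x) < Cmod x / 2) by (eapply Rlt_le_trans; [apply Hy| apply Rmin_l]).
  assert (Hy2 : Cmod (y - x) < eps * (Cmod x * Cmod x) / 2) by (eapply Rlt_le_trans; [apply Hy| apply Rmin_r]).
  assert (Hyx : Cmod x / 2 <= Cmod y).
  { generalize (Cmod_triangle y (x - y)). replace (y + (x - y)) with x by ring.
    rewrite (Cmod_sub_sym x y). lra. }
  assert (Hy0 : y <> 0). { intro. subst. rewrite Cmod_0 in Hyx. lra. }
  replace (/ y - / x) with ((x - y) * (/ x * / y)) by (field; auto).
  rewrite Cmod_mult, Cmod_mult, Cmod_inv, Cmod_inv by auto. rewrite Cmod_sub_sym.
  apply Cmod_gt_0 in Hy0.
  apply Rle_lt_trans with (Cmod (y - x) * (/ Cmod x * / (Cmod x / 2)))%R.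
  { apply Rmult_le_compat_l. apply Cmod_ge_0. apply Rmult_le_compat_l.
    left; apply Rinv_0_lt_compat; lra. apply Rinv_le_contravar; lra. }
  replace (Cmod (y - x) * (/ Cmod x * / (Cmod x / 2)))%R with (Cmod (y - x) * 2 / (Cmod x * Cmod x))%R by (field; lra).
  apply Rlt_div_l. nra. lra.
Qed.

Lemma D_Cinv (x : C) : x <> 0 -> is_derive Cinv x (- (/ x * / x)).
Proof.
  intros Hx. apply Cmod_gt_0 in Hx as Hm.
  replace (- (/ x * / x)) with ((fun y => - (/ y * / x)) x) by reflexivity.
  apply (carath Cinv (fun y => - (/ y * / x)) x (Cmod x / 2)%R). lra.
  { intros y Hy. assert (y <> 0).
    { intro; subst. rewrite Cmod_sub_sym in Hy. unfold Cminus in Hy. rewrite Copp_0, Cplus_0_r in Hy. lra. }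
    field; auto. }
  intros eps Heps. destruct (contC_inv x Hx (eps * Cmod x)%R) as [d [Hd Hy]]. nra.
  exists d. split; auto. intros y Hy1. specialize (Hy y Hy1).
  replace (- (/ y * / x) - - (/ x * / x)) with ((/ y - / x) * - / x) by ring.
  rewrite Cmod_mult, Cmod_opp, Cmod_inv by auto.
  apply Rmult_lt_reg_r with (Cmod x). lra. rewrite Rmult_assoc, Rinv_l; lra.
Qed.

Lemma D_inv (g : C -> C) x b : is_derive g x b -> g x <> 0 ->
  is_derive (fun t => / g t) x (- b * (/ g x * / g x)).
Proof. intros H1 H2. replace (- b * (/ g x * / g x)) with (b * - (/ g x * / g x)) by ring.
  apply (D_comp Cinv g). apply D_Cinv; auto. auto. Qed.

Lemma D_div (f g : C -> C) x a b : is_derive f x a -> is_derive g x b -> g x <> 0 ->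
  is_derive (fun t => f t / g t) x (a * / g x + f x * (- b * (/ g x * / g x))).
Proof. intros. apply (D_mult f (fun t => / g t)); auto. apply D_inv; auto. Qed.

Lemma is_derive_eq (f : C -> C) (x l1 l2 : C) : is_derive f x l1 -> l1 = l2 -> is_derive f x l2.
Proof. intros; subst; auto. Qed.

Lemma Cderiv_eq (f : C -> C) z l : is_derive f z l -> Cderiv f z = l.
Proof.
  intros H. unfold Cderiv.
  assert (H2 : is_derive f z (epsilon (inhabits (RtoC 0)) (fun l => @is_derive C_AbsRing C_NormedModule f z l))).
  { apply epsilon_spec. exists l; auto. }
  apply is_C_derive_unique in H. apply is_C_derive_unique in H2. congruence.
Qed.

Local Close Scope C_scope.


Lemma Ceq (a b : C) : Re a = Re b -> Im a = Im b -> a = b.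
Proof. destruct a, b; simpl; intros; subst; auto. Qed.

Definition Ep (m a nu : R) : C :=
  (RtoC (Rpower m nu) * (RtoC (cos (nu * a)) + Ci * RtoC (sin (nu * a))))%C.

Lemma Ep_Re m a nu : Re (Ep m a nu) = Rpower m nu * cos (nu * a).
Proof. unfold Ep, Cmult, Cplus, RtoC, Ci; simpl. ring. Qed.
Lemma Ep_Im m a nu : Im (Ep m a nu) = Rpower m nu * sin (nu * a).
Proof. unfold Ep, Cmult, Cplus, RtoC, Ci; simpl. ring. Qed.

Lemma Ep_mult m a n1 n2 : (Ep m a n1 * Ep m a n2)%C = Ep m a (n1 + n2).
Proof.
  apply Ceq.
  - rewrite Ep_Re. unfold Ep, Cmult, Cplus, RtoC, Ci; simpl.
    rewrite Rpower_plus. replace ((n1+n2)*a) with (n1*a + n2*a) by ring. rewrite cos_plus. ring.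
  - rewrite Ep_Im. unfold Ep, Cmult, Cplus, RtoC, Ci; simpl.
    rewrite Rpower_plus. replace ((n1+n2)*a) with (n1*a + n2*a) by ring. rewrite sin_plus. ring.
Qed.

Lemma Cmod_parts (z : C) : Cmod z = sqrt (Re z ^ 2 + Im z ^ 2).
Proof. reflexivity. Qed.

Lemma Cmod_Ep m a n : Cmod (Ep m a n) = Rpower m n.
Proof.
  rewrite Cmod_parts, Ep_Re, Ep_Im.
  replace ((Rpower m n * cos (n * a)) ^ 2 + (Rpower m n * sin (n * a)) ^ 2)
    with (Rpower m n ^ 2 * (sin (n * a) ^ 2 + cos (n * a) ^ 2)) by ring.
  rewrite <- !Rsqr_pow2, sin2_cos2, Rmult_1_r. apply sqrt_Rsqr.
  unfold Rpower; left; apply exp_pos.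
Qed.

Lemma Rpower_pos m n : 0 < Rpower m n.
Proof. unfold Rpower; apply exp_pos. Qed.

Lemma Cmod_pos_ne (z : C) : z <> 0%C -> 0 < Cmod z.
Proof. intros; apply Cmod_gt_0; auto. Qed.

Lemma Re_bound (z : C) : z <> 0%C -> -1 <= Re z / Cmod z <= 1.
Proof.
  intros Hz. apply Cmod_pos_ne in Hz. generalize (re_le_Cmod z). intros H.
  apply Rabs_le_between in H. split.
  - apply Rmult_le_reg_r with (Cmod z); auto. unfold Rdiv; rewrite Rmult_assoc, Rinv_l; lra.
  - apply Rmult_le_reg_r with (Cmod z); auto. unfold Rdiv; rewrite Rmult_assoc, Rinv_l; lra.
Qed.

Lemma sqrt_1_c2 (z : C) : z <> 0%C -> sqrt (1 - (Re z / Cmod z)²) = Rabs (Im z) / Cmod z.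
Proof.
  intros Hz. apply Cmod_pos_ne in Hz as Hm.
  assert (E : 1 - (Re z / Cmod z)² = (Im z / Cmod z)²).
  { generalize (Cmod2_alt z). intros H. unfold Rsqr. field_simplify; [ | lra | lra].
    f_equal. rewrite H. ring. }
  rewrite E, sqrt_Rsqr_abs. unfold Rdiv. rewrite Rabs_mult, Rabs_inv. 
  rewrite (Rabs_right (Cmod z)); lra.
Qed.

Lemma cos_m2PI a : cos (a - 2 * PI) = cos a.
Proof. rewrite <- (cos_period (a - 2*PI) 1). f_equal. simpl. ring. Qed.
Lemma sin_m2PI a : sin (a - 2 * PI) = sin a.
Proof. rewrite <- (sin_period (a - 2*PI) 1). f_equal. simpl. ring. Qed.

Lemma argD_cs (z : C) : z <> 0%C ->
  cos (argD z) = Re z / Cmod z /\ sin (argD z) = Im z / Cmod z.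
Proof.
  intros Hz. generalize (Re_bound z Hz) (sqrt_1_c2 z Hz). intros Hb Hs.
  apply Cmod_pos_ne in Hz as Hm.
  unfold argD. destruct (Rlt_dec (Im z) 0).
  - rewrite cos_neg, sin_neg, cos_acos, sin_acos, Hs by auto. split; auto.
    rewrite Rabs_left by auto. field. lra.
  - rewrite cos_m2PI, sin_m2PI, cos_acos, sin_acos, Hs by auto. split; auto.
    rewrite Rabs_right by lra. auto.
Qed.


Lemma im_le_Cmod (z : C) : Rabs (Im z) <= Cmod z.
Proof.
  generalize (Cmod2_alt z) (Cmod_ge_0 z). intros H H0.
  rewrite <- (Rabs_right (Cmod z)) by lra. apply Rsqr_le_abs_0.
  rewrite !Rsqr_pow2. nra.
Qed.

Lemma Cmod_le_parts (z : C) : Cmod z <= Rabs (Re z) + Rabs (Im z).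
Proof.
  rewrite Cmod_parts. rewrite <- (sqrt_Rsqr (Rabs (Re z) + Rabs (Im z))).
  2:{ generalize (Rabs_pos (Re z)) (Rabs_pos (Im z)); lra. }
  apply sqrt_le_1_alt. rewrite <- !Rsqr_pow2, (Rsqr_abs (Re z)), (Rsqr_abs (Im z)).
  unfold Rsqr. generalize (Rabs_pos (Re z)) (Rabs_pos (Im z)); nra.
Qed.

Definition contR (f : C -> R) (x : C) : Prop :=
  forall eps : R, 0 < eps -> exists del : R, 0 < del /\
    forall y, Cmod (y - x) < del -> Rabs (f y - f x) < eps.

Lemma Re_minus (y x : C) : Re (y - x)%C = Re y - Re x.
Proof. unfold Cminus, Cplus, Copp, Re, Im; simpl; ring. Qed.
Lemma Im_minus (y x : C) : Im (y - x)%C = Im y - Im x.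
Proof. unfold Cminus, Cplus, Copp, Re, Im; simpl; ring. Qed.

Lemma contR_Re x : contR Re x.
Proof. intros eps He. exists eps. split; auto. intros y Hy. rewrite <- Re_minus.
  eapply Rle_lt_trans. apply re_le_Cmod. auto. Qed.
Lemma contR_Im x : contR Im x.
Proof. intros eps He. exists eps. split; auto. intros y Hy. rewrite <- Im_minus.
  eapply Rle_lt_trans. apply im_le_Cmod. auto. Qed.
Lemma contR_Cmod x : contR Cmod x.
Proof. intros eps He. exists eps. split; auto. intros y Hy.
  eapply Rle_lt_trans; [|apply Hy].
  generalize (Cmod_triangle (y - x) x) (Cmod_triangle (x - y) y).
  replace (y - x + x)%C with y by ring. replace (x - y + y)%C with x by ring.
  rewrite (Cmod_sub_sym x y). intros. apply Rabs_le; lra.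
Qed.
Lemma contR_const c x : contR (fun _ => c) x.
Proof. intros eps He. exists 1. split. lra. intros. unfold Rminus; rewrite Rplus_opp_r, Rabs_R0; auto. Qed.

Lemma contR_plus f g x : contR f x -> contR g x -> contR (fun y => f y + g y) x.
Proof.
  intros Hf Hg eps He. destruct (Hf (eps/2)) as [d1 [Hd1 H1]]. lra.
  destruct (Hg (eps/2)) as [d2 [Hd2 H2]]. lra.
  exists (Rmin d1 d2). split. apply Rmin_case; lra.
  intros y Hy. specialize (H1 y (Rlt_le_trans _ _ _ Hy (Rmin_l _ _))).
  specialize (H2 y (Rlt_le_trans _ _ _ Hy (Rmin_r _ _))).
  replace (f y + g y - (f x + g x)) with ((f y - f x) + (g y - g x)) by ring.
  eapply Rle_lt_trans. apply Rabs_triang. lra.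
Qed.

Lemma contR_mult f g x : contR f x -> contR g x -> contR (fun y => f y * g y) x.
Proof.
  intros Hf Hg eps He.
  set (A := Rabs (f x) + 1). set (B := Rabs (g x) + 1).
  assert (HA : 0 < A) by (unfold A; generalize (Rabs_pos (f x)); lra).
  assert (HB : 0 < B) by (unfold B; generalize (Rabs_pos (g x)); lra).
  destruct (Hf (eps / (2 * B))) as [d1 [Hd1 H1]]. apply Rdiv_lt_0_compat; lra.
  destruct (Hg (Rmin 1 (eps / (2 * A)))) as [d2 [Hd2 H2]]. apply Rmin_case. lra. apply Rdiv_lt_0_compat; lra.
  exists (Rmin d1 d2). split. apply Rmin_case; lra.
  intros y Hy. specialize (H1 y (Rlt_le_trans _ _ _ Hy (Rmin_l _ _))).
  specialize (H2 y (Rlt_le_trans _ _ _ Hy (Rmin_r _ _))).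
  assert (H2a : Rabs (g y - g x) < 1) by (eapply Rlt_le_trans; [apply H2|apply Rmin_l]).
  assert (H2b : Rabs (g y - g x) < eps / (2 * A)) by (eapply Rlt_le_trans; [apply H2|apply Rmin_r]).
  replace (f y * g y - f x * g x) with ((f y - f x) * g y + f x * (g y - g x)) by ring.
  eapply Rle_lt_trans. apply Rabs_triang. rewrite !Rabs_mult.
  assert (Hgy : Rabs (g y) <= B).
  { unfold B. replace (g y) with (g x + (g y - g x)) by ring.
    eapply Rle_trans. apply Rabs_triang. lra. }
  assert (E1 : Rabs (f y - f x) * Rabs (g y) <= eps / (2 * B) * B).
  { apply Rmult_le_compat; try apply Rabs_pos; lra. }
  replace (eps / (2 * B) * B) with (eps / 2) in E1 by (field; lra).
  assert (Rabs (f x) * Rabs (g y - g x) < eps / 2).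
  { apply Rle_lt_trans with (A * Rabs (g y - g x)).
    apply Rmult_le_compat_r. apply Rabs_pos. unfold A; lra.
    apply Rmult_lt_reg_l with (/ A). apply Rinv_0_lt_compat; lra.
    rewrite <- Rmult_assoc, Rinv_l, Rmult_1_l by lra.
    replace (/ A * (eps / 2)) with (eps / (2 * A)) by (field; lra). auto. }
  lra.
Qed.

Lemma contR_comp (g : R -> R) f x : continuity_pt g (f x) -> contR f x -> contR (fun y => g (f y)) x.
Proof.
  intros Hg Hf eps He. destruct (Hg eps He) as [alp [Ha Hg2]].
  destruct (Hf alp Ha) as [d [Hd Hf2]]. exists d. split; auto.
  intros y Hy. destruct (Req_dec (f x) (f y)) as [E|E].
  - rewrite E. unfold Rminus; rewrite Rplus_opp_r, Rabs_R0; auto.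
  - apply (Hg2 (f y)). split. split. constructor. auto. apply Hf2; auto.
Qed.

Lemma contR_ext f g x (d : R) : 0 < d -> (forall y, Cmod (y - x) < d -> f y = g y) ->
  contR g x -> contR f x.
Proof.
  intros Hd Hfg Hg eps He. destruct (Hg eps He) as [d1 [Hd1 H1]].
  exists (Rmin d d1). split. apply Rmin_case; lra. intros y Hy.
  rewrite !Hfg. apply H1. eapply Rlt_le_trans; [apply Hy|apply Rmin_r].
  unfold Cminus; rewrite Cplus_opp_r, Cmod_0; auto.
  eapply Rlt_le_trans; [apply Hy|apply Rmin_l].
Qed.

Lemma contC_parts (f : C -> C) x : contR (fun y => Re (f y)) x -> contR (fun y => Im (f y)) x -> contC f x.
Proof.
  intros H1 H2 eps He. destruct (H1 (eps/2)) as [d1 [Hd1 G1]]. lra.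
  destruct (H2 (eps/2)) as [d2 [Hd2 G2]]. lra.
  exists (Rmin d1 d2). split. apply Rmin_case; lra. intros y Hy.
  specialize (G1 y (Rlt_le_trans _ _ _ Hy (Rmin_l _ _))).
  specialize (G2 y (Rlt_le_trans _ _ _ Hy (Rmin_r _ _))).
  eapply Rle_lt_trans. apply Cmod_le_parts. rewrite Re_minus, Im_minus. lra.
Qed.

Lemma contC_comp (g f : C -> C) x : contC g (f x) -> contC f x -> contC (fun y => g (f y)) x.
Proof.
  intros Hg Hf eps He. destruct (Hg eps He) as [a [Ha G]].
  destruct (Hf a Ha) as [d [Hd F]]. exists d. split; auto.
Qed.

Lemma cont_pt_of_lim (g : R -> R) x l : derivable_pt_lim g x l -> continuity_pt g x.
Proof. intros H. apply derivable_continuous_pt. exists l. exact H. Qed.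

Lemma contR_cos f x : contR f x -> contR (fun y => cos (f y)) x.
Proof. intros; apply contR_comp; auto. apply continuity_cos. Qed.
Lemma contR_sin f x : contR f x -> contR (fun y => sin (f y)) x.
Proof. intros; apply contR_comp; auto. apply continuity_sin. Qed.
Lemma contR_atan f x : contR f x -> contR (fun y => atan (f y)) x.
Proof. intros; apply contR_comp; auto. apply derivable_continuous_pt. apply derivable_pt_atan. Qed.
Lemma contR_inv f x : contR f x -> f x <> 0 -> contR (fun y => / f y) x.
Proof. intros H H0; apply (contR_comp Rinv); auto.
  exact (continuity_pt_inv (fun t => t) (f x) (continuity_pt_id (f x)) H0). Qed.
Lemma contR_Rpower f x a : contR f x -> 0 < f x -> contR (fun y => Rpower (f y) a) x.
Proof. intros H H0; apply (contR_comp (fun m => Rpower m a)); auto.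
  eapply cont_pt_of_lim. apply derivable_pt_lim_power; auto. Qed.


Lemma atan_char t v : -(PI/2) < t < PI/2 -> sin t = v * cos t -> t = atan v.
Proof.
  intros Ht Hs. assert (Hc : 0 < cos t) by (apply cos_gt_0; lra).
  assert (E : tan t = v) by (unfold tan; rewrite Hs; field; lra).
  rewrite <- E. symmetry. apply atan_tan. lra.
Qed.

Lemma argD_rng (z : C) : (Im z < 0 -> -PI <= argD z <= 0) /\ (0 <= Im z -> -2*PI <= argD z <= -PI).
Proof.
  unfold argD. generalize (acos_bound (Re z / Cmod z)). intros Hb. split; intros H.
  - destruct (Rlt_dec (Im z) 0); [lra | contradiction].
  - destruct (Rlt_dec (Im z) 0); [lra | lra].
Qed.

Lemma PI_pos' : 0 < PI. Proof. exact PI_RGT_0. Qed.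

Lemma argD_A (y : C) : Im y < 0 -> argD y = atan (-(Re y) * / Im y) - PI/2.
Proof.
  intros H. assert (Hy : y <> 0%C). { intro; subst; simpl in H; lra. }
  destruct (argD_cs y Hy) as [Hc Hs]. apply Cmod_pos_ne in Hy as Hm.
  destruct (argD_rng y) as [R1 _]. specialize (R1 H).
  assert (Hsn : sin (argD y) < 0). { rewrite Hs. apply Rdiv_neg_pos; auto. }
  assert (N1 : argD y <> 0) by (intro E; rewrite E, sin_0 in Hsn; lra).
  assert (N2 : argD y <> -PI) by (intro E; rewrite E, sin_neg, sin_PI in Hsn; lra).
  enough (argD y + PI/2 = atan (-(Re y) * / Im y)) by lra.
  apply atan_char. lra.
  rewrite sin_plus, cos_plus, sin_PI2, cos_PI2, Hc, Hs. field. split; lra.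
Qed.

Lemma argD_B (y : C) : 0 < Im y -> argD y = atan (-(Re y) * / Im y) - 3 * (PI/2).
Proof.
  intros H. assert (Hy : y <> 0%C). { intro; subst; simpl in H; lra. }
  destruct (argD_cs y Hy) as [Hc Hs]. apply Cmod_pos_ne in Hy as Hm.
  destruct (argD_rng y) as [_ R1]. specialize (R1 (Rlt_le _ _ H)).
  assert (Hsn : 0 < sin (argD y)). { rewrite Hs. apply Rdiv_lt_0_compat; auto. }
  assert (N1 : argD y <> -PI) by (intro E; rewrite E, sin_neg, sin_PI in Hsn; lra).
  assert (N2 : argD y <> -2*PI) by (intro E; rewrite E in Hsn; replace (-2*PI) with (-(2*PI)) in Hsn by ring; rewrite sin_neg, sin_2PI in Hsn; lra).
  enough (argD y + 3*(PI/2) = atan (-(Re y) * / Im y)) by lra.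
  apply atan_char. lra.
  rewrite sin_plus, cos_plus, sin_3PI2, cos_3PI2, Hc, Hs. field. split; lra.
Qed.

Lemma argD_C (y : C) : Re y < 0 -> argD y = atan (Im y * / Re y) - PI.
Proof.
  intros H. assert (Hy : y <> 0%C). { intro; subst; simpl in H; lra. }
  destruct (argD_cs y Hy) as [Hc Hs]. apply Cmod_pos_ne in Hy as Hm.
  destruct (argD_rng y) as [R1 R2].
  assert (Hcn : cos (argD y) < 0). { rewrite Hc. apply Rdiv_neg_pos; auto. }
  assert (Rg : -2*PI <= argD y <= 0). { destruct (Rlt_dec (Im y) 0). specialize (R1 r); lra. specialize (R2 (Rnot_lt_le _ _ n)); lra. }
  assert (N1 : -(3*(PI/2)) < argD y).
  { destruct (Rlt_dec (-(3*(PI/2))) (argD y)); auto. exfalso.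
    assert (0 <= cos (argD y + 2 * PI)) by (apply cos_ge_0; lra).
    rewrite <- (cos_m2PI (argD y + 2*PI)) in H0. replace (argD y + 2 * PI - 2 * PI) with (argD y) in H0 by ring. lra. }
  assert (N2 : argD y < -(PI/2)).
  { destruct (Rlt_dec (argD y) (-(PI/2))); auto. exfalso.
    assert (0 <= cos (argD y)) by (apply cos_ge_0; lra). lra. }
  enough (argD y + PI = atan (Im y * / Re y)) by lra.
  apply atan_char. lra.
  rewrite neg_sin, neg_cos, Hc, Hs. field. split; lra.
Qed.

Definition NP (z : C) : Prop := Im z <> 0 \/ Re z < 0.

Lemma NP_ne0 z : NP z -> z <> 0%C.
Proof. intros [H|H] E; subst; simpl in H; lra. Qed.

Lemma contR_argD x : NP x -> contR argD x.
Proof.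
  intros Hx.
  assert (Case : Im x < 0 \/ 0 < Im x \/ Re x < 0).
  { destruct Hx as [H|H]; [destruct (Rlt_dec (Im x) 0); [left|right;left]; auto; lra | auto]. }
  destruct Case as [H|[H|H]].
  - apply (contR_ext argD (fun y => atan ((-1 * Re y) * / Im y) + - (PI/2)) x (- Im x)). lra.
    { intros y Hy. assert (Rabs (Im y - Im x) < - Im x).
      { rewrite <- Im_minus. eapply Rle_lt_trans. apply im_le_Cmod. auto. }
      apply Rabs_def2 in H0. rewrite argD_A by lra. replace (-1 * Re y) with (- Re y) by ring. ring. }
    apply contR_plus; [|apply contR_const]. apply contR_atan. apply contR_mult.
    apply contR_mult. apply contR_const. apply contR_Re. apply contR_inv. apply contR_Im. lra.
  - apply (contR_ext argD (fun y => atan ((-1 * Re y) * / Im y) + - (3*(PI/2))) x (Im x)). lra.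
    { intros y Hy. assert (Rabs (Im y - Im x) < Im x).
      { rewrite <- Im_minus. eapply Rle_lt_trans. apply im_le_Cmod. auto. }
      apply Rabs_def2 in H0. rewrite argD_B by lra. replace (-1 * Re y) with (- Re y) by ring. ring. }
    apply contR_plus; [|apply contR_const]. apply contR_atan. apply contR_mult.
    apply contR_mult. apply contR_const. apply contR_Re. apply contR_inv. apply contR_Im. lra.
  - apply (contR_ext argD (fun y => atan (Im y * / Re y) + - PI) x (- Re x)). lra.
    { intros y Hy. assert (Rabs (Re y - Re x) < - Re x).
      { rewrite <- Re_minus. eapply Rle_lt_trans. apply re_le_Cmod. auto. }
      apply Rabs_def2 in H0. rewrite argD_C by lra. ring. }
    apply contR_plus; [|apply contR_const]. apply contR_atan. apply contR_mult.
    apply contR_Im. apply contR_inv. apply contR_Re. lra.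
Qed.

Lemma cpowD_Ep U nu : cpowD U nu = Ep (Cmod U) (argD U) nu.
Proof. reflexivity. Qed.

Lemma contC_cpowD x nu : NP x -> contC (fun y => cpowD y nu) x.
Proof.
  intros Hx. apply NP_ne0 in Hx as H0. apply Cmod_pos_ne in H0.
  apply contC_parts.
  - apply (contR_ext _ (fun y => Rpower (Cmod y) nu * cos (nu * argD y)) x 1). lra.
    intros; rewrite cpowD_Ep, Ep_Re; auto.
    apply contR_mult. apply contR_Rpower; auto. apply contR_Cmod.
    apply contR_cos. apply contR_mult. apply contR_const. apply contR_argD; auto.
  - apply (contR_ext _ (fun y => Rpower (Cmod y) nu * sin (nu * argD y)) x 1). lra.
    intros; rewrite cpowD_Ep, Ep_Im; auto.
    apply contR_mult. apply contR_Rpower; auto. apply contR_Cmod.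
    apply contR_sin. apply contR_mult. apply contR_const. apply contR_argD; auto.
Qed.


Lemma RtoC_div' a b : b <> 0 -> RtoC (a / b) = (RtoC a / RtoC b)%C.
Proof. intros. apply Ceq; simpl; field; auto. Qed.

Lemma Cmul_ne0 (a b : C) : a <> 0%C -> b <> 0%C -> (a * b)%C <> 0%C.
Proof. intros Ha Hb E. apply Cmod_pos_ne in Ha. apply Cmod_pos_ne in Hb.
  generalize (Cmod_mult a b). rewrite E, Cmod_0. intros. nra. Qed.

Lemma three_aa_ne0 (a : C) : a <> 0%C -> (a * a + a * a + a * a)%C <> 0%C.
Proof. intros Ha. replace (a * a + a * a + a * a)%C with (RtoC 3 * (a * a))%C by ring.
  apply Cmul_ne0. intro E; apply RtoC_inj in E; lra. apply Cmul_ne0; auto. Qed.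

Lemma cpowD_mult (U : C) a b : (cpowD U a * cpowD U b)%C = cpowD U (a + b).
Proof. rewrite !cpowD_Ep. apply Ep_mult. Qed.

Lemma Ep_one (w : C) a : w <> 0%C -> cos a = Re w / Cmod w -> sin a = Im w / Cmod w ->
  Ep (Cmod w) a 1 = w.
Proof.
  intros Hw Hc Hs. apply Cmod_pos_ne in Hw as Hm. apply Ceq.
  - rewrite Ep_Re, Rpower_1, Rmult_1_l, Hc by auto. field. lra.
  - rewrite Ep_Im, Rpower_1, Rmult_1_l, Hs by auto. field. lra.
Qed.

Lemma cpowD_one (U : C) : U <> 0%C -> cpowD U 1 = U.
Proof. intros H. rewrite cpowD_Ep. destruct (argD_cs U H). apply Ep_one; auto. Qed.

Lemma Cmod_cpowD (U : C) a : Cmod (cpowD U a) = Rpower (Cmod U) a.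
Proof. rewrite cpowD_Ep. apply Cmod_Ep. Qed.

Lemma cpowD_ne0 (U : C) a : cpowD U a <> 0%C.
Proof. intro E. generalize (Cmod_cpowD U a). rewrite E, Cmod_0. intro H. generalize (Rpower_pos (Cmod U) a). lra. Qed.

Notation S U := (cpowD U (1/3)).

Lemma s_cube (U : C) : U <> 0%C -> (S U * S U * S U)%C = U.
Proof. intros H. rewrite !cpowD_mult. replace (1/3+1/3+1/3) with 1 by field. apply cpowD_one; auto. Qed.
Lemma cpow23 (U : C) : cpowD U (2/3) = (S U * S U)%C.
Proof. rewrite cpowD_mult. f_equal. field. Qed.
Lemma cpow43 (U : C) : cpowD U (4/3) = (S U * S U * S U * S U)%C.
Proof. rewrite !cpowD_mult. f_equal. field. Qed.

Lemma D_S (x : C) : NP x -> is_derive (fun u => S u) x (/ (RtoC 3 * (S x * S x)))%C.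
Proof.
  intros Hx. apply NP_ne0 in Hx as H0. apply Cmod_pos_ne in H0 as Hm.
  set (a := S x). assert (Ha : a <> 0%C) by apply cpowD_ne0.
  apply is_derive_eq with ((fun y => / (S y * S y + S y * a + a * a)) x)%C.
  2:{ cbv beta. fold a. clearbody a. field. split; auto. apply three_aa_ne0; auto. }
  apply (carath (fun u => S u) (fun y => / (S y * S y + S y * a + a * a))%C x (Cmod x)). auto.
  - intros y Hy. assert (Hy0 : y <> 0%C).
    { intro E; subst. rewrite Cmod_sub_sym in Hy. unfold Cminus in Hy. rewrite Copp_0, Cplus_0_r in Hy. lra. }
    set (b := S y). assert (Hb : b <> 0%C) by apply cpowD_ne0.
    assert (Ey : (b * b * b)%C = y) by (apply s_cube; auto).
    assert (Ex : (a * a * a)%C = x) by (apply s_cube; auto).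
    assert (HD : (b * b + b * a + a * a)%C <> 0%C).
    { intro E. assert (Eyx : (y - x)%C = ((b - a) * (b * b + b * a + a * a))%C) by (rewrite <- Ey, <- Ex; ring).
      rewrite E, Cmult_0_r in Eyx. assert (Hyx : y = x).
      { replace y with ((y - x) + x)%C by ring. rewrite Eyx. ring. }
      assert (Hba : b = a) by (unfold b, a; rewrite Hyx; reflexivity).
      rewrite Hba in E. revert E. apply three_aa_ne0; auto. }
    cbv beta. fold b. fold a. clearbody a b. rewrite <- Ey, <- Ex. field. auto.
  - apply (contC_comp (fun z => / (z * z + z * a + a * a))%C (fun y => S y)).
    + eapply contC_of_derive. apply D_inv.
      apply D_plus. apply D_plus. apply D_mult; apply D_id. apply D_mult. apply D_id. apply D_const. apply D_const.
      apply three_aa_ne0; auto.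
    + apply contC_cpowD; auto.
Qed.


Lemma argP_cs (z : C) : z <> 0%C ->
  cos (argP z) = Re z / Cmod z /\ sin (argP z) = Im z / Cmod z.
Proof.
  intros Hz. generalize (Re_bound z Hz) (sqrt_1_c2 z Hz). intros Hb Hs.
  apply Cmod_pos_ne in Hz as Hm.
  unfold argP. destruct (Rlt_dec (Im z) 0).
  - rewrite cos_neg, sin_neg, cos_acos, sin_acos, Hs by auto. split; auto.
    rewrite Rabs_left by auto. field. lra.
  - rewrite cos_acos, sin_acos, Hs by auto. split; auto.
    rewrite Rabs_right by lra. auto.
Qed.

Lemma cos_nonpos_a t : PI/2 <= t <= PI -> cos t <= 0.
Proof. intros H. generalize PI_RGT_0; intro. replace t with ((t - PI) + PI) by ring. rewrite neg_cos.
  assert (0 <= cos (t - PI)) by (apply cos_ge_0; lra). lra. Qed.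
Lemma cos_nonpos_b t : -PI <= t <= -(PI/2) -> cos t <= 0.
Proof. intros H. generalize PI_RGT_0; intro. replace t with ((t + PI) - PI) by ring. rewrite <- (cos_neg (t + PI - PI)).
  replace (- (t + PI - PI)) with ((-t - PI) + PI) by ring. rewrite neg_cos.
  assert (0 <= cos (-t - PI)) by (apply cos_ge_0; lra). lra. Qed.

Lemma argP_rng (w : C) : 0 < Re w -> -(PI/2) < argP w < PI/2.
Proof.
  intros H. assert (Hw : w <> 0%C) by (intro E; subst; simpl in H; lra).
  destruct (argP_cs w Hw) as [Hc _]. apply Cmod_pos_ne in Hw as Hm.
  assert (Hcp : 0 < cos (argP w)) by (rewrite Hc; apply Rdiv_lt_0_compat; auto).
  generalize (acos_bound (Re w / Cmod w)) PI_RGT_0. intros Hb HPI.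
  unfold argP in *. destruct (Rlt_dec (Im w) 0).
  - split; [|lra]. destruct (Rlt_dec (-(PI/2)) (- acos (Re w / Cmod w))); auto.
    exfalso. assert (cos (- acos (Re w / Cmod w)) <= 0) by (apply cos_nonpos_b; lra). lra.
  - split; [lra|]. destruct (Rlt_dec (acos (Re w / Cmod w)) (PI/2)); auto.
    exfalso. assert (cos (acos (Re w / Cmod w)) <= 0) by (apply cos_nonpos_a; lra). lra.
Qed.

Lemma argP_atan (w : C) : 0 < Re w -> argP w = atan (Im w * / Re w).
Proof.
  intros H. assert (Hw : w <> 0%C) by (intro E; subst; simpl in H; lra).
  destruct (argP_cs w Hw) as [Hc Hs]. apply Cmod_pos_ne in Hw as Hm.
  apply atan_char. apply argP_rng; auto. rewrite Hc, Hs. field. split; lra.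
Qed.

Lemma contR_argP x : 0 < Re x -> contR argP x.
Proof.
  intros H. apply (contR_ext argP (fun y => atan (Im y * / Re y)) x (Re x)). lra.
  { intros y Hy. assert (Rabs (Re y - Re x) < Re x).
    { rewrite <- Re_minus. eapply Rle_lt_trans. apply re_le_Cmod. auto. }
    apply Rabs_def2 in H0. apply argP_atan. lra. }
  apply contR_atan. apply contR_mult. apply contR_Im. apply contR_inv. apply contR_Re. lra.
Qed.

Notation P w := (cpowP w (-1/2)).

Lemma cpowP_Ep w nu : cpowP w nu = Ep (Cmod w) (argP w) nu.
Proof. reflexivity. Qed.

Lemma contC_P x : 0 < Re x -> contC (fun y => P y) x.
Proof.
  intros Hx. assert (H0 : x <> 0%C) by (intro E; subst; simpl in Hx; lra).
  apply Cmod_pos_ne in H0.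
  apply contC_parts.
  - apply (contR_ext _ (fun y => Rpower (Cmod y) (-1/2) * cos ((-1/2) * argP y)) x 1). lra.
    intros; rewrite cpowP_Ep, Ep_Re; auto.
    apply contR_mult. apply contR_Rpower; auto. apply contR_Cmod.
    apply contR_cos. apply contR_mult. apply contR_const. apply contR_argP; auto.
  - apply (contR_ext _ (fun y => Rpower (Cmod y) (-1/2) * sin ((-1/2) * argP y)) x 1). lra.
    intros; rewrite cpowP_Ep, Ep_Im; auto.
    apply contR_mult. apply contR_Rpower; auto. apply contR_Cmod.
    apply contR_sin. apply contR_mult. apply contR_const. apply contR_argP; auto.
Qed.

Lemma Ep_zero m a : Ep m a 0 = RtoC 1.
Proof. apply Ceq; rewrite ?Ep_Re, ?Ep_Im; unfold Rpower; rewrite !Rmult_0_l, exp_0, ?cos_0, ?sin_0; simpl; ring. Qed.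

Lemma P_sq (w : C) : w <> 0%C -> (P w * P w * w)%C = RtoC 1.
Proof.
  intros Hw. destruct (argP_cs w Hw) as [Hc Hs].
  rewrite <- (Ep_one w (argP w)) at 3 by auto. rewrite !cpowP_Ep, !Ep_mult.
  replace (-1/2 + -1/2 + 1) with 0 by field. apply Ep_zero.
Qed.

Lemma Cmod_P (w : C) : Cmod (P w) = Rpower (Cmod w) (-1/2).
Proof. rewrite cpowP_Ep. apply Cmod_Ep. Qed.

Lemma P_ne0 (w : C) : P w <> 0%C.
Proof. intro E. generalize (Cmod_P w). rewrite E, Cmod_0. generalize (Rpower_pos (Cmod w) (-1/2)). lra. Qed.

Lemma Re_P_pos (w : C) : 0 < Re w -> 0 < Re (P w).
Proof.
  intros H. rewrite cpowP_Ep, Ep_Re. apply Rmult_lt_0_compat. apply Rpower_pos.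
  apply cos_gt_0; generalize (argP_rng w H); lra.
Qed.

Lemma Re_le_Cmod' (z : C) : Re z <= Cmod z.
Proof. generalize (re_le_Cmod z). intros. apply Rabs_le_between in H. lra. Qed.

Lemma Re_plus (a b : C) : Re (a + b)%C = Re a + Re b.
Proof. reflexivity. Qed.

Lemma D_P (w : C) : 0 < Re w -> is_derive (fun v => P v) w (RtoC (-1/2) * (P w * P w * P w))%C.
Proof.
  intros Hw. assert (Hw0 : w <> 0%C) by (intro E; subst; simpl in Hw; lra).
  set (a := P w). assert (Ha : a <> 0%C) by apply P_ne0.
  assert (Hra : 0 < Re a) by (apply Re_P_pos; auto).
  assert (Haa : (a + a)%C <> 0%C).
  { intro E. assert (Re (a + a)%C = 0) by (rewrite E; reflexivity). rewrite Re_plus in H. lra. }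
  apply is_derive_eq with ((fun v => - (P v * P v * (a * a)) * / (P v + a)) w)%C.
  2:{ cbv beta. fold a. clearbody a. rewrite RtoC_div' by lra. field. auto. }
  apply (carath (fun v => P v) (fun v => - (P v * P v * (a * a)) * / (P v + a))%C w (Re w)). auto.
  - intros v Hv. assert (Hrv : 0 < Re v).
    { assert (Rabs (Re v - Re w) < Re w).
      { rewrite <- Re_minus. eapply Rle_lt_trans. apply re_le_Cmod. auto. }
      apply Rabs_def2 in H. lra. }
    assert (Hv0 : v <> 0%C) by (intro E; subst; simpl in Hrv; lra).
    set (b := P v). assert (Hb : b <> 0%C) by apply P_ne0.
    assert (Hrb : 0 < Re b) by (apply Re_P_pos; auto).
    assert (Hba : (b + a)%C <> 0%C).
    { intro E. assert (Re (b + a)%C = 0) by (rewrite E; reflexivity). rewrite Re_plus in H. lra. }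
    assert (Ev : (b * b * v)%C = RtoC 1) by (apply P_sq; auto).
    assert (Ew : (a * a * w)%C = RtoC 1) by (apply P_sq; auto).
    cbv beta. fold b. fold a. clearbody a b.
    assert (Ev' : v = (/ (b * b))%C).
    { replace v with ((b * b * v) * / (b * b))%C by (field; auto). rewrite Ev. ring. }
    assert (Ew' : w = (/ (a * a))%C).
    { replace w with ((a * a * w) * / (a * a))%C by (field; auto). rewrite Ew. ring. }
    rewrite Ev', Ew'. field. auto.
  - apply (contC_comp (fun z => - (z * z * (a * a)) * / (z + a))%C (fun v => P v)).
    + eapply contC_of_derive. apply D_mult. apply D_opp. apply D_mult. apply D_mult; apply D_id. apply D_const.
      apply D_inv. apply D_plus. apply D_id. apply D_const. auto.
    + apply contC_P; auto.
Qed.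

Lemma P_bound (J : C) : Cmod J <= 1/2 -> Cmod (P (RtoC 1 + J)%C) <= 2.
Proof.
  intros HJ. rewrite Cmod_P.
  assert (Hm : 1/2 <= Cmod (RtoC 1 + J)%C).
  { generalize (Cmod_triangle (RtoC 1 + J)%C (- J)%C). rewrite Cmod_opp.
    replace (RtoC 1 + J + - J)%C with (RtoC 1) by ring. rewrite Cmod_R, Rabs_R1. lra. }
  replace (-1/2) with (- / 2) by field. rewrite Rpower_Ropp, Rpower_sqrt by lra.
  assert (1/2 < sqrt (Cmod (RtoC 1 + J)%C)).
  { apply Rlt_le_trans with (sqrt (1/2)). apply sqrt_more; lra. apply sqrt_le_1_alt. lra. }
  apply Rle_trans with (/ (1/2)). apply Rinv_le_contravar; lra. lra.
Qed.

Lemma P_m1_bound (J : C) : Cmod J <= 1/2 -> Cmod (P (RtoC 1 + J)%C - RtoC 1)%C <= 4 * Cmod J.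
Proof.
  intros HJ. assert (Hw : 0 < Re (RtoC 1 + J)%C).
  { rewrite Re_plus. simpl. generalize (re_le_Cmod J). intros H. apply Rabs_le_between in H. lra. }
  assert (Hw0 : (RtoC 1 + J)%C <> 0%C) by (intro E; rewrite E in Hw; simpl in Hw; lra).
  set (p := P (RtoC 1 + J)%C). assert (Hp : p <> 0%C) by apply P_ne0.
  assert (Hrp : 0 < Re p) by (apply Re_P_pos; auto).
  assert (Hb : Cmod p <= 2) by (apply P_bound; auto).
  assert (E : (p * p * (RtoC 1 + J))%C = RtoC 1) by (apply P_sq; auto).
  clearbody p.
  assert (Hp1 : (p + RtoC 1)%C <> 0%C).
  { intro E1. assert (Re (p + RtoC 1)%C = 0) by (rewrite E1; reflexivity). rewrite Re_plus in H. simpl in H. lra. }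
  assert (Ep1 : (p - RtoC 1)%C = (- (p * p * J) * / (p + RtoC 1))%C).
  { assert (E2 : ((p - RtoC 1) * (p + RtoC 1))%C = (- (p * p * J))%C).
    { replace ((p - RtoC 1) * (p + RtoC 1))%C with (p * p - RtoC 1)%C by ring.
      rewrite <- E. ring. }
    replace (p - RtoC 1)%C with (((p - RtoC 1) * (p + RtoC 1)) * / (p + RtoC 1))%C by (field; auto).
    rewrite E2. reflexivity. }
  rewrite Ep1, Cmod_mult, Cmod_opp, !Cmod_mult, Cmod_inv by auto.
  assert (1 < Cmod (p + RtoC 1)%C).
  { eapply Rlt_le_trans; [|apply Re_le_Cmod']. rewrite Re_plus. simpl. lra. }
  assert (0 < / Cmod (p + RtoC 1)%C < 1).
  { split. apply Rinv_0_lt_compat; lra. apply Rmult_lt_reg_l with (Cmod (p + RtoC 1)%C); [lra|]. rewrite Rinv_r by lra. lra. }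
  generalize (Cmod_ge_0 p) (Cmod_ge_0 J). intros.
  assert (Cmod p * Cmod p <= 4) by nra.
  assert (Cmod p * Cmod p * Cmod J <= 4 * Cmod J) by nra.
  nra.
Qed.


Lemma D_cpow23 (x : C) : NP x -> is_derive (fun u => cpowD u (2/3)) x (RtoC (2/3) * cpowD x (2/3) / x)%C.
Proof.
  intros Hx. assert (H0 : x <> 0%C) by (apply NP_ne0; auto).
  apply (is_derive_ext (fun u => S u * S u)%C). { intros; symmetry; apply cpow23. }
  eapply is_derive_eq. apply D_mult; apply D_S; auto.
  rewrite cpow23. assert (Ex : (S x * S x * S x)%C = x) by (apply s_cube; auto).
  assert (Hs : S x <> 0%C) by apply cpowD_ne0.
  set (s := S x) in *. clearbody s. rewrite <- Ex. rewrite RtoC_div' by lra. field. auto.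
Qed.

Lemma D_cpow43 (x : C) : NP x -> is_derive (fun u => cpowD u (4/3)) x (RtoC (4/3) * cpowD x (4/3) / x)%C.
Proof.
  intros Hx. assert (H0 : x <> 0%C) by (apply NP_ne0; auto).
  apply (is_derive_ext (fun u => S u * S u * S u * S u)%C). { intros; symmetry; apply cpow43. }
  eapply is_derive_eq. apply D_mult. apply D_mult. apply D_mult. 1-4: apply D_S; auto.
  rewrite cpow43. assert (Ex : (S x * S x * S x)%C = x) by (apply s_cube; auto).
  assert (Hs : S x <> 0%C) by apply cpowD_ne0.
  set (s := S x) in *. clearbody s. rewrite <- Ex. rewrite RtoC_div' by lra. field. auto.
Qed.

Lemma D_Pc (g : C -> C) (x b : C) : is_derive g x b -> 0 < Re (g x) ->
  is_derive (fun t => P (g t)) x (b * (RtoC (-1/2) * (P (g x) * P (g x) * P (g x))))%C.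
Proof. intros. apply (D_comp (fun v => P v) g). apply D_P; auto. auto. Qed.

Ltac unfold_fn h := fail.
Ltac dstep :=
  match goal with
  | |- is_derive (fun _ => Kfun _ _ _ _) _ _ => unfold Kfun; cbv beta
  | |- is_derive (fun _ => Jfun _ _ _ _) _ _ => unfold Jfun; cbv beta
  | |- is_derive (Kfun _ _ _) _ _ => unfold Kfun; cbv beta
  | |- is_derive (Jfun _ _ _) _ _ => unfold Jfun; cbv beta
  | |- is_derive (fun _ => ?h _ _ _ _) _ _ => unfold_fn h; cbv beta
  | |- is_derive (?h _ _ _) _ _ => unfold_fn h; cbv beta
  | |- is_derive (fun t => t) _ _ => apply D_id
  | |- is_derive (fun t => cpowP (@?g t) (-1/2)) _ _ => apply D_Pc
  | |- is_derive (fun t => cpowD t (2/3)) _ _ => apply D_cpow23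
  | |- is_derive (fun t => cpowD t (4/3)) _ _ => apply D_cpow43
  | |- is_derive (fun t => Cplus (@?a t) (@?b t)) _ _ => apply D_plus
  | |- is_derive (fun t => Cminus (@?a t) (@?b t)) _ _ => apply D_minus
  | |- is_derive (fun t => Copp (@?a t)) _ _ => apply D_opp
  | |- is_derive (fun t => Cdiv (@?a t) (@?b t)) _ _ => apply D_div
  | |- is_derive (fun t => Cinv (@?a t)) _ _ => apply D_inv
  | |- is_derive (fun t => Cmult (@?a t) (@?b t)) _ _ => apply D_mult
  | |- is_derive (fun t => ?c) _ _ => apply D_const
  | |- is_derive (Cmult ?c) _ _ => apply (D_mult (fun _ => c) (fun t => t))
  | |- is_derive (Cplus ?c) _ _ => apply (D_plus (fun _ => c) (fun t => t))
  | |- is_derive (Cminus ?c) _ _ => apply (D_minus (fun _ => c) (fun t => t))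
  | |- is_derive (Cdiv ?c) _ _ => apply (D_div (fun _ => c) (fun t => t))
  | |- is_derive Copp _ _ => apply (D_opp (fun t => t))
  | |- is_derive Cinv _ _ => apply (D_inv (fun t => t))
  end.
Ltac autoD := repeat (match goal with |- is_derive _ _ _ => dstep end).

Lemma RtoC_ne0 (r : R) : r <> 0 -> RtoC r <> 0%C.
Proof. intros H E. apply RtoC_inj in E. auto. Qed.

Ltac ne0 := repeat first [ assumption | apply cpowD_ne0 | apply P_ne0 | apply Cmul_ne0
                          | (apply RtoC_ne0; lra) ].

Lemma Cminus_0_r (a : C) : (a - RtoC 0)%C = a. Proof. ring. Qed.
Lemma Cminus_0_l (a : C) : (RtoC 0 - a)%C = (- a)%C. Proof. ring. Qed.
Lemma Cmult_0_l' (a : C) : (RtoC 0 * a)%C = RtoC 0. Proof. ring. Qed.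
Lemma Cmult_0_r' (a : C) : (a * RtoC 0)%C = RtoC 0. Proof. ring. Qed.
Lemma Cplus_0_l' (a : C) : (RtoC 0 + a)%C = a. Proof. ring. Qed.
Lemma Cplus_0_r' (a : C) : (a + RtoC 0)%C = a. Proof. ring. Qed.
Lemma Cmult_1_l' (a : C) : (RtoC 1 * a)%C = a. Proof. ring. Qed.
Lemma Cmult_1_r' (a : C) : (a * RtoC 1)%C = a. Proof. ring. Qed.
Lemma Copp_0' : (- RtoC 0)%C = RtoC 0. Proof. ring. Qed.
Ltac csimp := repeat (rewrite ?Cminus_0_r, ?Cminus_0_l, ?Cmult_0_l', ?Cmult_0_r', ?Cplus_0_l', ?Cplus_0_r', ?Cmult_1_l', ?Cmult_1_r', ?Copp_0').


Definition KWf (U W X Y : C) : C :=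
  (- RtoC (3 / 4) * cpowD U (2 / 3) * W + - RtoC (3 / 4) * cpowD U (2 / 3) * W - RtoC 1 / (RtoC 3 * cpowD U (2 / 3)) * (((RtoC (4 / 9) * W + RtoC (4 / 9) * W) * / cpowD U (2 / 3) - RtoC (16 / 27) * / cpowD U (4 / 3) + RtoC (4 / 9) * (X + Y) / U) * (RtoC (-1 / 2) * (P (RtoC 1 + Jfun U W X Y) * P (RtoC 1 + Jfun U W X Y) * P (RtoC 1 + Jfun U W X Y)))))%C.

Definition KXf (U W X Y : C) : C :=
  (- (RtoC 1 / (RtoC 3 * cpowD U (2 / 3)) * ((RtoC (4 / 9) * / U * (W - RtoC (2 / 3) / cpowD U (2 / 3)) - RtoC 4 * Ci * / (RtoC 3 * cpowD U (2 / 3)) - (X + X) * / (RtoC 3 * cpowD U (4 / 3)) + RtoC (10 / 9) * Y * / cpowD U (4 / 3)) * (RtoC (-1 / 2) * (P (RtoC 1 + Jfun U W X Y) * P (RtoC 1 + Jfun U W X Y) * P (RtoC 1 + Jfun U W X Y))))))%C.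

Definition KYf (U W X Y : C) : C :=
  (- (RtoC 1 / (RtoC 3 * cpowD U (2 / 3)) * ((RtoC (4 / 9) * / U * (W - RtoC (2 / 3) / cpowD U (2 / 3)) - RtoC 4 * Ci * - RtoC 1 * / (RtoC 3 * cpowD U (2 / 3)) - (Y + Y) * / (RtoC 3 * cpowD U (4 / 3)) + RtoC (10 / 9) * X * / cpowD U (4 / 3)) * (RtoC (-1 / 2) * (P (RtoC 1 + Jfun U W X Y) * P (RtoC 1 + Jfun U W X Y) * P (RtoC 1 + Jfun U W X Y))))))%C.

Definition KUf (U W X Y : C) : C :=
  (- RtoC (3 / 4) * (RtoC (2 / 3) * cpowD U (2 / 3) / U) * W * W - (- (RtoC 3 * (RtoC (2 / 3) * cpowD U (2 / 3) / U)) * (/ (RtoC 3 * cpowD U (2 / 3)) * / (RtoC 3 * cpowD U (2 / 3))) * (P (RtoC 1 + Jfun U W X Y) - RtoC 1) + RtoC 1 / (RtoC 3 * cpowD U (2 / 3)) * ((RtoC (4 / 9) * W * W * (- (RtoC (2 / 3) * cpowD U (2 / 3) / U) * (/ cpowD U (2 / 3) * / cpowD U (2 / 3))) - RtoC (16 / 27) * W * (- (RtoC (4 / 3) * cpowD U (4 / 3) / U) * (/ cpowD U (4 / 3) * / cpowD U (4 / 3))) + RtoC (16 / 81) * (- (U + U) * (/ (U * U) * / (U * U))) + (RtoC (4 / 9) * (X + Y) * (- RtoC 1 * (/ U * / U)) * (W - RtoC (2 / 3) / cpowD U (2 / 3)) + RtoC (4 / 9) * (X + Y) / U * - (RtoC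 (2 / 3) * (- (RtoC (2 / 3) * cpowD U (2 / 3) / U) * (/ cpowD U (2 / 3) * / cpowD U (2 / 3))))) - RtoC 4 * Ci * (X - Y) * (- (RtoC 3 * (RtoC (2 / 3) * cpowD U (2 / 3) / U)) * (/ (RtoC 3 * cpowD U (2 / 3)) * / (RtoC 3 * cpowD U (2 / 3)))) - (X * X + Y * Y) * (- (RtoC 3 * (RtoC (4 / 3) * cpowD U (4 / 3) / U)) * (/ (RtoC 3 * cpowD U (4 / 3)) * / (RtoC 3 * cpowD U (4 / 3)))) + RtoC (10 / 9) * X * Y * (- (RtoC (4 / 3) * cpowD U (4 / 3) / U) * (/ cpowD U (4 / 3) * / cpowD U (4 / 3)))) * (RtoC (-1 / 2) * (P (RtoC 1 + Jfun U W X Y) * P (RtoC 1 + Jfun U W X Y) * P (RtoC 1 + Jfun U W X Y))))))%C.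

Section DK.
Variables (U W X Y : C).
Hypothesis HU : NP U.
Hypothesis HJ : 0 < Re (RtoC 1 + Jfun U W X Y)%C.

Let HU0 : U <> 0%C := NP_ne0 U HU.

Lemma dKW : is_derive (fun w => Kfun U w X Y) W (KWf U W X Y).
Proof. eapply is_derive_eq. autoD; cbv beta; ne0. cbv beta. csimp. reflexivity. Qed.
Lemma dKX : is_derive (fun x => Kfun U W x Y) X (KXf U W X Y).
Proof. eapply is_derive_eq. autoD; cbv beta; ne0. cbv beta. csimp. reflexivity. Qed.
Lemma dKY : is_derive (fun y => Kfun U W X y) Y (KYf U W X Y).
Proof. eapply is_derive_eq. autoD; cbv beta; ne0. cbv beta. csimp. reflexivity. Qed.
Lemma dKU : is_derive (fun u => Kfun u W X Y) U (KUf U W X Y).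
Proof. eapply is_derive_eq. autoD; cbv beta; ne0. cbv beta. csimp. reflexivity. Qed.
End DK.

Definition R1f (U W X Y : C) : C :=
  ((- KUf U W X Y - KWf U W X Y * RtoC 0) / (RtoC 1 + KWf U W X Y))%C.
Definition R2f (U W X Y : C) : C :=
  ((Ci * KYf U W X Y - KWf U W X Y * (Ci * X)) / (RtoC 1 + KWf U W X Y))%C.
Definition R3f (U W X Y : C) : C :=
  ((- Ci * KXf U W X Y - KWf U W X Y * (- Ci * Y)) / (RtoC 1 + KWf U W X Y))%C.

Lemma Rc1_eq U W X Y : NP U -> 0 < Re (RtoC 1 + Jfun U W X Y)%C -> Rc1 U W X Y = R1f U W X Y.
Proof. intros. unfold Rc1, gfun, dU, dW. rewrite (Cderiv_eq (fun u => Kfun u W X Y) U _ (dKU U W X Y H H0)), (Cderiv_eq (fun w => Kfun U w X Y) W _ (dKW U W X Y H H0)). reflexivity. Qed.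
Lemma Rc2_eq U W X Y : NP U -> 0 < Re (RtoC 1 + Jfun U W X Y)%C -> Rc2 U W X Y = R2f U W X Y.
Proof. intros. unfold Rc2, gfun, dY, dW. rewrite (Cderiv_eq (fun y => Kfun U W X y) Y _ (dKY U W X Y H H0)), (Cderiv_eq (fun w => Kfun U w X Y) W _ (dKW U W X Y H H0)). reflexivity. Qed.
Lemma Rc3_eq U W X Y : NP U -> 0 < Re (RtoC 1 + Jfun U W X Y)%C -> Rc3 U W X Y = R3f U W X Y.
Proof. intros. unfold Rc3, gfun, dX, dW. rewrite (Cderiv_eq (fun x => Kfun U W x Y) X _ (dKX U W X Y H H0)), (Cderiv_eq (fun w => Kfun U w X Y) W _ (dKW U W X Y H H0)). reflexivity. Qed.

Lemma ext_J (F G j : C -> C) (x l : C) : contC j x -> 0 < Re (RtoC 1 + j x)%C ->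
  (forall y, 0 < Re (RtoC 1 + j y)%C -> F y = G y) -> is_derive G x l -> is_derive F x l.
Proof.
  intros Hc Hp HFG HG. apply (is_derive_ext_loc G F x l); auto.
  destruct (Hc _ Hp) as [d [Hd H]]. exists (mkposreal d Hd). intros y Hy.
  symmetry. apply HFG. specialize (H y Hy). rewrite Re_plus in *.
  generalize (re_le_Cmod (j y - j x)%C). rewrite Re_minus. intros.
  apply Rabs_le_between in H0. lra.
Qed.


Definition Bnd (T : R) (e : C) (k : Z) (c : R) : Prop := Cmod e <= c * powerRZ T k.
Definition LB (T : R) (e : C) (k : Z) (c : R) : Prop := 0 < c /\ c * powerRZ T k <= Cmod e.

Lemma pRZ_pos T k : 1 <= T -> 0 < powerRZ T k.
Proof. intros; apply powerRZ_lt; lra. Qed.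

Lemma pRZ_mono T k1 k2 : 1 <= T -> (k1 <= k2)%Z -> powerRZ T k1 <= powerRZ T k2.
Proof. intros. rewrite !powerRZ_Rpower by lra. apply Rle_Rpower; auto. apply IZR_le; auto. Qed.

Lemma B_nonneg T e k c : 1 <= T -> Bnd T e k c -> 0 <= c.
Proof. unfold Bnd. intros HT H. generalize (Cmod_ge_0 e) (pRZ_pos T k HT). intros.
  destruct (Rle_dec 0 c); auto. exfalso. nra. Qed.

Lemma B_weak T e k k' c : 1 <= T -> Bnd T e k c -> (k <= k')%Z -> Bnd T e k' c.
Proof. unfold Bnd. intros HT H Hk. generalize (B_nonneg _ _ _ _ HT H). intros.
  eapply Rle_trans. apply H. apply Rmult_le_compat_l; auto. apply pRZ_mono; auto. Qed.

Lemma B_plus T a b k1 k2 c1 c2 : 1 <= T -> Bnd T a k1 c1 -> Bnd T b k2 c2 ->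
  Bnd T (a + b)%C (Z.max k1 k2) (c1 + c2).
Proof. intros HT H1 H2.
  apply (B_weak _ _ _ (Z.max k1 k2) _ HT) in H1. 2: apply Z.le_max_l.
  apply (B_weak _ _ _ (Z.max k1 k2) _ HT) in H2. 2: apply Z.le_max_r.
  unfold Bnd in *. eapply Rle_trans. apply Cmod_triangle. lra. Qed.

Lemma B_opp T a k c : Bnd T a k c -> Bnd T (- a)%C k c.
Proof. unfold Bnd. rewrite Cmod_opp. auto. Qed.

Lemma B_minus T a b k1 k2 c1 c2 : 1 <= T -> Bnd T a k1 c1 -> Bnd T b k2 c2 ->
  Bnd T (a - b)%C (Z.max k1 k2) (c1 + c2).
Proof. intros. unfold Cminus. apply B_plus; auto. apply B_opp; auto. Qed.

Lemma B_mult T a b k1 k2 c1 c2 : 1 <= T -> Bnd T a k1 c1 -> Bnd T b k2 c2 ->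
  Bnd T (a * b)%C (k1 + k2) (c1 * c2).
Proof. intros HT H1 H2. generalize (B_nonneg _ _ _ _ HT H1) (B_nonneg _ _ _ _ HT H2). intros.
  unfold Bnd in *. rewrite Cmod_mult, powerRZ_add by lra.
  replace (c1 * c2 * (powerRZ T k1 * powerRZ T k2)) with ((c1 * powerRZ T k1) * (c2 * powerRZ T k2)) by ring.
  apply Rmult_le_compat; auto; apply Cmod_ge_0. Qed.

Lemma B_inv T a k c : 1 <= T -> LB T a k c -> Bnd T (/ a)%C (- k) (/ c).
Proof. intros HT [Hc H]. generalize (pRZ_pos T k HT). intros.
  assert (Ha : a <> 0%C). { intro E. rewrite E, Cmod_0 in H. nra. }
  unfold Bnd. rewrite Cmod_inv by auto. rewrite powerRZ_neg'.
  rewrite <- Rinv_mult. apply Rinv_le_contravar; auto. nra. Qed.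

Lemma B_div T a b k1 k2 c1 c2 : 1 <= T -> Bnd T a k1 c1 -> LB T b k2 c2 ->
  Bnd T (a / b)%C (k1 + - k2) (c1 * / c2).
Proof. intros. unfold Cdiv. apply B_mult; auto. apply B_inv; auto. Qed.

Lemma B_R T r : Bnd T (RtoC r) 0 (Rabs r).
Proof. unfold Bnd. rewrite Cmod_R. simpl. lra. Qed.

Lemma B_0 T : Bnd T (RtoC 0) (-1000) 0.
Proof. unfold Bnd. rewrite Cmod_0. lra. Qed.

Lemma B_Ci T : Bnd T Ci 0 1.
Proof. unfold Bnd. rewrite Cmod_Ci. simpl. lra. Qed.

Lemma LB_mult T a b k1 k2 c1 c2 : 1 <= T -> LB T a k1 c1 -> LB T b k2 c2 -> LB T (a * b)%C (k1 + k2) (c1 * c2).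
Proof. intros HT [H1 G1] [H2 G2]. generalize (pRZ_pos T k1 HT) (pRZ_pos T k2 HT). intros.
  split. nra. rewrite Cmod_mult, powerRZ_add by lra.
  replace (c1 * c2 * (powerRZ T k1 * powerRZ T k2)) with ((c1 * powerRZ T k1) * (c2 * powerRZ T k2)) by ring.
  apply Rmult_le_compat; nra. Qed.

Lemma LB_R T r : r <> 0 -> LB T (RtoC r) 0 (Rabs r).
Proof. intros. split. apply Rabs_pos_lt; auto. rewrite Cmod_R. simpl. lra. Qed.

Lemma B_P T (J : C) : Cmod J <= 1/2 -> Bnd T (P (RtoC 1 + J)%C) 0 2.
Proof. intros. unfold Bnd. simpl. rewrite Rmult_1_r. apply P_bound; auto. Qed.

Lemma B_Pm1 T (J : C) k c : Bnd T J k c -> Cmod J <= 1/2 -> Bnd T (P (RtoC 1 + J)%C - RtoC 1)%C k (4 * c).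
Proof. unfold Bnd. intros. eapply Rle_trans. apply P_m1_bound; auto. lra. Qed.

Lemma LB_1K T (K : C) : Cmod K <= 1/2 -> LB T (RtoC 1 + K)%C 0 (1/2).
Proof. intros. split. lra. simpl. rewrite Rmult_1_r.
  generalize (Cmod_triangle (RtoC 1 + K)%C (- K)%C). rewrite Cmod_opp.
  replace (RtoC 1 + K + - K)%C with (RtoC 1) by ring. rewrite Cmod_R, Rabs_R1. lra. Qed.

Ltac bnd :=
  match goal with
  | |- Bnd _ (Cminus (cpowP (Cplus (RtoC 1) _) _) (RtoC 1)) _ _ => eapply B_Pm1; eassumption
  | |- Bnd _ (cpowP (Cplus (RtoC 1) _) _) _ _ => eapply B_P; eassumption
  | |- Bnd _ (Cplus _ _) _ _ => eapply B_plus; [assumption|bnd|bnd]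
  | |- Bnd _ (Cminus _ _) _ _ => eapply B_minus; [assumption|bnd|bnd]
  | |- Bnd _ (Copp _) _ _ => eapply B_opp; bnd
  | |- Bnd _ (Cmult _ _) _ _ => eapply B_mult; [assumption|bnd|bnd]
  | |- Bnd _ (Cdiv _ _) _ _ => eapply B_div; [assumption|bnd|lb]
  | |- Bnd _ (Cinv _) _ _ => eapply B_inv; [assumption|lb]
  | |- Bnd _ (RtoC 0) _ _ => apply B_0
  | |- Bnd _ (RtoC _) _ _ => apply B_R
  | |- Bnd _ Ci _ _ => apply B_Ci
  | |- Bnd _ (KUf _ _ _ _) _ _ => unfold KUf; bnd
  | |- Bnd _ (KWf _ _ _ _) _ _ => unfold KWf; bnd
  | |- Bnd _ (KXf _ _ _ _) _ _ => unfold KXf; bnd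
  | |- Bnd _ (KYf _ _ _ _) _ _ => unfold KYf; bnd
  | |- Bnd _ _ _ _ => eassumption
  end
with lb :=
  match goal with
  | |- LB _ (Cmult _ _) _ _ => eapply LB_mult; [assumption|lb|lb]
  | |- LB _ (Cplus (RtoC 1) _) _ _ => eapply LB_1K; eassumption
  | |- LB _ (RtoC _) _ _ => apply LB_R; lra
  | |- LB _ _ _ _ => eassumption
  end.

Ltac bound := eapply B_weak; [assumption | bnd | apply Z.leb_le; compute; reflexivity].

Record Adm (rho CJ T : R) (U W X Y : C) : Prop := mkAdm {
  a_T : 1 <= T;
  a_NP : NP U;
  a_BU : Bnd T U 3 1; a_LU : LB T U 3 1;
  a_B2 : Bnd T (cpowD U (2/3)) 2 1; a_L2 : LB T (cpowD U (2/3)) 2 1;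
  a_B4 : Bnd T (cpowD U (4/3)) 4 1; a_L4 : LB T (cpowD U (4/3)) 4 1;
  a_W : Bnd T W (-8) rho; a_X : Bnd T X (-4) rho; a_Y : Bnd T Y (-4) rho;
  a_J : Cmod (Jfun U W X Y) <= 1/2;
  a_JB : Bnd T (Jfun U W X Y) (-6) CJ;
  a_K : Cmod (KWf U W X Y) <= 1/2 }.

Lemma J_bound rho : exists CJ, forall T U W X Y, 1 <= T ->
  Bnd T U 3 1 -> LB T U 3 1 -> Bnd T (cpowD U (2/3)) 2 1 -> LB T (cpowD U (2/3)) 2 1 ->
  Bnd T (cpowD U (4/3)) 4 1 -> LB T (cpowD U (4/3)) 4 1 ->
  Bnd T W (-8) rho -> Bnd T X (-4) rho -> Bnd T Y (-4) rho ->
  Bnd T (Jfun U W X Y) (-6) CJ.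
Proof. eexists. intros. unfold Jfun. bound. Qed.

Lemma K_bound rho CJ : exists CK, forall T U W X Y, 1 <= T ->
  Bnd T U 3 1 -> LB T U 3 1 -> Bnd T (cpowD U (2/3)) 2 1 -> LB T (cpowD U (2/3)) 2 1 ->
  Bnd T (cpowD U (4/3)) 4 1 -> LB T (cpowD U (4/3)) 4 1 ->
  Bnd T W (-8) rho -> Bnd T X (-4) rho -> Bnd T Y (-4) rho ->
  Cmod (Jfun U W X Y) <= 1/2 -> Bnd T (Jfun U W X Y) (-6) CJ ->
  Bnd T (KWf U W X Y) (-6) CK.
Proof. eexists. intros. unfold KWf. bound. Qed.


Ltac unfold_fn h ::= first [ constr_eq h R1f; unfold R1f | constr_eq h R2f; unfold R2f
  | constr_eq h R3f; unfold R3f | constr_eq h KUf; unfold KUf | constr_eq h KWf; unfold KWf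
  | constr_eq h KXf; unfold KXf | constr_eq h KYf; unfold KYf ].

Lemma Re_pos_small (J : C) : Cmod J <= 1/2 -> 0 < Re (RtoC 1 + J)%C.
Proof. intros. rewrite Re_plus. simpl. generalize (re_le_Cmod J). intros H0. apply Rabs_le_between in H0. lra. Qed.

Lemma ne0_small (K : C) : Cmod K <= 1/2 -> (RtoC 1 + K)%C <> 0%C.
Proof. intros H E. generalize (Re_pos_small K H). rewrite E. simpl. lra. Qed.

Ltac prep HA := destruct HA;
  match goal with H : Cmod (Jfun ?U ?W ?X ?Y) <= 1/2, H' : Cmod (KWf ?U ?W ?X ?Y) <= 1/2, N : NP ?U |- _ =>
    assert (HJp : 0 < Re (RtoC 1 + Jfun U W X Y)%C) by (apply Re_pos_small; auto);
    assert (HU0 : U <> 0%C) by (apply NP_ne0; auto);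
    assert (HK0 : (RtoC 1 + KWf U W X Y)%C <> 0%C) by (apply ne0_small; auto) end.

Lemma b_R1 rho CJ : exists C, forall T U W X Y, Adm rho CJ T U W X Y -> Bnd T (Rc1 U W X Y) (-11) C.
Proof. eexists. intros T U W X Y HA. prep HA. rewrite Rc1_eq by auto. unfold R1f. bound. Qed.
Lemma b_R2 rho CJ : exists C, forall T U W X Y, Adm rho CJ T U W X Y -> Bnd T (Rc2 U W X Y) (-4) C.
Proof. eexists. intros T U W X Y HA. prep HA. rewrite Rc2_eq by auto. unfold R2f. bound. Qed.
Lemma b_R3 rho CJ : exists C, forall T U W X Y, Adm rho CJ T U W X Y -> Bnd T (Rc3 U W X Y) (-4) C.
Proof. eexists. intros T U W X Y HA. prep HA. rewrite Rc3_eq by auto. unfold R3f. bound. Qed.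

Lemma b_dWR1 rho CJ : exists C, forall T U W X Y, Adm rho CJ T U W X Y -> Bnd T (dW Rc1 U W X Y) (-9) C.
Proof.
  eexists. intros T U W X Y HA. prep HA. unfold dW.
  eassert (D : is_derive (fun w => Rc1 U w X Y) W _).
  { eapply (ext_J _ (fun w => R1f U w X Y) (fun w => Jfun U w X Y)).
    - eapply contC_of_derive. autoD; cbv beta; ne0.
    - exact HJp.
    - intros y Hy. apply Rc1_eq; auto.
    - autoD; cbv beta; ne0. }
  rewrite (Cderiv_eq (fun w => Rc1 U w X Y) W _ D). clear D. cbv beta. bound.
Qed.

Lemma b_dXR1 rho CJ : exists C, forall T U W X Y, Adm rho CJ T U W X Y -> Bnd T (dX Rc1 U W X Y) (-7) C.
Proof.
  eexists. intros T U W X Y HA. prep HA. unfold dX.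
  eassert (D : is_derive (fun x => Rc1 U W x Y) X _).
  { eapply (ext_J _ (fun x => R1f U W x Y) (fun x => Jfun U W x Y)).
    - eapply contC_of_derive. autoD; cbv beta; ne0.
    - exact HJp.
    - intros y Hy. apply Rc1_eq; auto.
    - autoD; cbv beta; ne0. }
  rewrite (Cderiv_eq (fun x => Rc1 U W x Y) X _ D). clear D. cbv beta. bound.
Qed.

Lemma b_dYR1 rho CJ : exists C, forall T U W X Y, Adm rho CJ T U W X Y -> Bnd T (dY Rc1 U W X Y) (-7) C.
Proof.
  eexists. intros T U W X Y HA. prep HA. unfold dY.
  eassert (D : is_derive (fun y => Rc1 U W X y) Y _).
  { eapply (ext_J _ (fun y => R1f U W X y) (fun y => Jfun U W X y)).
    - eapply contC_of_derive. autoD; cbv beta; ne0.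
    - exact HJp.
    - intros y Hy. apply Rc1_eq; auto.
    - autoD; cbv beta; ne0. }
  rewrite (Cderiv_eq (fun y => Rc1 U W X y) Y _ D). clear D. cbv beta. bound.
Qed.

Lemma b_dWR2 rho CJ : exists C, forall T U W X Y, Adm rho CJ T U W X Y -> Bnd T (dW Rc2 U W X Y) (-2) C.
Proof.
  eexists. intros T U W X Y HA. prep HA. unfold dW.
  eassert (D : is_derive (fun w => Rc2 U w X Y) W _).
  { eapply (ext_J _ (fun w => R2f U w X Y) (fun w => Jfun U w X Y)).
    - eapply contC_of_derive. autoD; cbv beta; ne0.
    - exact HJp.
    - intros y Hy. apply Rc2_eq; auto.
    - autoD; cbv beta; ne0. }
  rewrite (Cderiv_eq (fun w => Rc2 U w X Y) W _ D). clear D. cbv beta. bound.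
Qed.

Lemma b_dXR2 rho CJ : exists C, forall T U W X Y, Adm rho CJ T U W X Y -> Bnd T (dX Rc2 U W X Y) (-6) C.
Proof.
  eexists. intros T U W X Y HA. prep HA. unfold dX.
  eassert (D : is_derive (fun x => Rc2 U W x Y) X _).
  { eapply (ext_J _ (fun x => R2f U W x Y) (fun x => Jfun U W x Y)).
    - eapply contC_of_derive. autoD; cbv beta; ne0.
    - exact HJp.
    - intros y Hy. apply Rc2_eq; auto.
    - autoD; cbv beta; ne0. }
  rewrite (Cderiv_eq (fun x => Rc2 U W x Y) X _ D). clear D. cbv beta. bound.
Qed.

Lemma b_dYR2 rho CJ : exists C, forall T U W X Y, Adm rho CJ T U W X Y -> Bnd T (dY Rc2 U W X Y) (-6) C.
Proof.
  eexists. intros T U W X Y HA. prep HA. unfold dY.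
  eassert (D : is_derive (fun y => Rc2 U W X y) Y _).
  { eapply (ext_J _ (fun y => R2f U W X y) (fun y => Jfun U W X y)).
    - eapply contC_of_derive. autoD; cbv beta; ne0.
    - exact HJp.
    - intros y Hy. apply Rc2_eq; auto.
    - autoD; cbv beta; ne0. }
  rewrite (Cderiv_eq (fun y => Rc2 U W X y) Y _ D). clear D. cbv beta. bound.
Qed.

Lemma b_dWR3 rho CJ : exists C, forall T U W X Y, Adm rho CJ T U W X Y -> Bnd T (dW Rc3 U W X Y) (-2) C.
Proof.
  eexists. intros T U W X Y HA. prep HA. unfold dW.
  eassert (D : is_derive (fun w => Rc3 U w X Y) W _).
  { eapply (ext_J _ (fun w => R3f U w X Y) (fun w => Jfun U w X Y)).
    - eapply contC_of_derive. autoD; cbv beta; ne0.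
    - exact HJp.
    - intros y Hy. apply Rc3_eq; auto.
    - autoD; cbv beta; ne0. }
  rewrite (Cderiv_eq (fun w => Rc3 U w X Y) W _ D). clear D. cbv beta. bound.
Qed.

Lemma b_dXR3 rho CJ : exists C, forall T U W X Y, Adm rho CJ T U W X Y -> Bnd T (dX Rc3 U W X Y) (-6) C.
Proof.
  eexists. intros T U W X Y HA. prep HA. unfold dX.
  eassert (D : is_derive (fun x => Rc3 U W x Y) X _).
  { eapply (ext_J _ (fun x => R3f U W x Y) (fun x => Jfun U W x Y)).
    - eapply contC_of_derive. autoD; cbv beta; ne0.
    - exact HJp.
    - intros y Hy. apply Rc3_eq; auto.
    - autoD; cbv beta; ne0. }
  rewrite (Cderiv_eq (fun x => Rc3 U W x Y) X _ D). clear D. cbv beta. bound.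
Qed.

Lemma b_dYR3 rho CJ : exists C, forall T U W X Y, Adm rho CJ T U W X Y -> Bnd T (dY Rc3 U W X Y) (-6) C.
Proof.
  eexists. intros T U W X Y HA. prep HA. unfold dY.
  eassert (D : is_derive (fun y => Rc3 U W X y) Y _).
  { eapply (ext_J _ (fun y => R3f U W X y) (fun y => Jfun U W X y)).
    - eapply contC_of_derive. autoD; cbv beta; ne0.
    - exact HJp.
    - intros y Hy. apply Rc3_eq; auto.
    - autoD; cbv beta; ne0. }
  rewrite (Cderiv_eq (fun y => Rc3 U W X y) Y _ D). clear D. cbv beta. bound.
Qed.


Lemma pw (x : R) (m : Z) : 0 < x -> Rpower x (IZR m / 3) = powerRZ (Rpower x (1/3)) m.
Proof. intros. rewrite powerRZ_Rpower by apply Rpower_pos. rewrite Rpower_mult. f_equal. field. Qed.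

Lemma final_pt T (U e : C) k c nu : 1 <= T -> Bnd T e k c -> Rpower (Cmod U) nu = powerRZ T (- k) ->
  Cmod (cpowD U nu * e)%C <= c.
Proof.
  intros HT H E. unfold Bnd in H. rewrite Cmod_mult, Cmod_cpowD, E.
  generalize (pRZ_pos T (-k) HT). intros.
  apply Rle_trans with (powerRZ T (- k) * (c * powerRZ T k)). apply Rmult_le_compat_l; lra.
  replace (powerRZ T (- k) * (c * powerRZ T k)) with (c * (powerRZ T (-k) * powerRZ T k)) by ring.
  rewrite <- powerRZ_add by lra. replace (- k + k)%Z with 0%Z by lia. simpl. lra.
Qed.

Lemma wnorm_le beta0 kappa nu phi (Cst : R) :
  (forall U, inD beta0 kappa U -> Cmod (cpowD U nu * phi U)%C <= Cst) ->
  Rbar_le (wnorm beta0 kappa nu phi) Cst.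
Proof.
  intros H. unfold wnorm. destruct (Lub_Rbar_correct (fun r => exists U, inD beta0 kappa U /\ r = Cmod (cpowD U nu * phi U)%C)) as [_ H2].
  apply H2. intros x [U [HU ->]]. simpl. apply H; auto.
Qed.

Lemma wnorm_elem beta0 kappa nu phi U : is_finite (wnorm beta0 kappa nu phi) -> inD beta0 kappa U ->
  Cmod (cpowD U nu * phi U)%C <= real (wnorm beta0 kappa nu phi).
Proof.
  intros Hf HU. unfold wnorm in *. destruct (Lub_Rbar_correct (fun r => exists U, inD beta0 kappa U /\ r = Cmod (cpowD U nu * phi U)%C)) as [H1 _].
  specialize (H1 (Cmod (cpowD U nu * phi U)%C)). rewrite <- Hf in H1. simpl in H1. apply H1. exists U; auto.
Qed.

Lemma tan_pos b : 0 < b -> b < PI/2 -> 0 < tan b.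
Proof. intros. unfold tan. apply Rdiv_lt_0_compat. apply sin_gt_0; lra. apply cos_gt_0; lra. Qed.

Lemma inD_facts a kappa (U : C) : 0 < a -> 0 < kappa -> Rabs (Im U) >= a * Re U + kappa ->
  NP U /\ kappa / (2 * (1 + a)) <= Cmod U.
Proof.
  intros Ha Hk H. split.
  - destruct (Req_dec (Im U) 0) as [E|E]; [right|left; auto].
    rewrite E, Rabs_R0 in H. nra.
  - set (m := kappa / (2 * (1 + a))).
    assert (Hm : 0 < m) by (unfold m; apply Rdiv_lt_0_compat; lra).
    assert (Hm2 : m * (2 * (1 + a)) = kappa) by (unfold m; field; lra).
    destruct (Rle_dec m (Rabs (Im U))).
    + eapply Rle_trans. apply r. apply im_le_Cmod.
    + assert (a * Re U < m - kappa) by lra.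
      assert (HR : m <= - Re U).
      { apply Rmult_le_reg_l with a; auto. nra. }
      eapply Rle_trans; [|apply re_le_Cmod]. rewrite Rabs_left; lra.
Qed.

Lemma ball_bound beta0 kappa rho (Z1 Z2 Z3 : C -> C) U : in_ball beta0 kappa rho Z1 Z2 Z3 -> inD beta0 kappa U ->
  Cmod (cpowD U (8/3) * Z1 U)%C <= rho /\ Cmod (cpowD U (4/3) * Z2 U)%C <= rho /\ Cmod (cpowD U (4/3) * Z3 U)%C <= rho.
Proof.
  intros [[_ F1] [[_ F2] [[_ F3] Hs]]] HU.
  generalize (wnorm_elem _ _ _ _ U F1 HU) (wnorm_elem _ _ _ _ U F2 HU) (wnorm_elem _ _ _ _ U F3 HU).
  generalize (Cmod_ge_0 (cpowD U (8/3) * Z1 U)%C) (Cmod_ge_0 (cpowD U (4/3) * Z2 U)%C) (Cmod_ge_0 (cpowD U (4/3) * Z3 U)%C).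
  intros. lra.
Qed.

Lemma Bnd_of_weighted T (U Zv : C) rho (m : Z) nu : 1 <= T -> Rpower (Cmod U) nu = powerRZ T m ->
  Cmod (cpowD U nu * Zv)%C <= rho -> Bnd T Zv (- m) rho.
Proof.
  intros HT E H. unfold Bnd. rewrite Cmod_mult, Cmod_cpowD, E in H.
  generalize (pRZ_pos T m HT). intros. rewrite powerRZ_neg'.
  apply Rmult_le_reg_l with (powerRZ T m); auto.
  replace (powerRZ T m * (rho * / powerRZ T m)) with rho by (field; lra). auto.
Qed.

Lemma Bnd_small T J k c : 1 <= T -> (k <= -1)%Z -> 2 * Rabs c <= T -> Bnd T J k c -> Cmod J <= 1/2.
Proof.
  intros HT Hk Hc H. unfold Bnd in H. generalize (B_nonneg _ _ _ _ HT H). intros.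
  assert (powerRZ T k <= / T).
  { replace (/ T) with (powerRZ T (-1)) by (simpl; field; lra). apply pRZ_mono; auto. }
  generalize (pRZ_pos T k HT). intros. rewrite Rabs_right in Hc by lra.
  assert (c * powerRZ T k <= c * / T) by (apply Rmult_le_compat_l; auto).
  assert (c * / T <= 1/2).
  { apply Rmult_le_reg_r with T. lra. rewrite Rmult_assoc, Rinv_l by lra. lra. }
  lra.
Qed.

Lemma pw' (x : R) (m : Z) nu : 0 < x -> nu = IZR m / 3 -> Rpower x nu = powerRZ (Rpower x (1/3)) m.
Proof. intros. subst. apply pw; auto. Qed.

Lemma Rpower_cube_root R0 : 0 < R0 -> Rpower (R0 ^ 3) (1/3) = R0.
Proof. intros. rewrite <- (Rpower_pow 3 R0) by auto. rewrite Rpower_mult.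
  replace (INR 3 * (1/3)) with 1 by (simpl; field). apply Rpower_1; auto. Qed.

Lemma key beta0 rho kappa CJ CK (Z1 Z2 Z3 : C -> C) U :
  0 < beta0 -> beta0 < PI/2 -> 0 < rho -> 0 < kappa ->
  (forall T U W X Y, 1 <= T ->
    Bnd T U 3 1 -> LB T U 3 1 -> Bnd T (cpowD U (2/3)) 2 1 -> LB T (cpowD U (2/3)) 2 1 ->
    Bnd T (cpowD U (4/3)) 4 1 -> LB T (cpowD U (4/3)) 4 1 ->
    Bnd T W (-8) rho -> Bnd T X (-4) rho -> Bnd T Y (-4) rho ->
    Bnd T (Jfun U W X Y) (-6) CJ) ->
  (forall T U W X Y, 1 <= T ->
    Bnd T U 3 1 -> LB T U 3 1 -> Bnd T (cpowD U (2/3)) 2 1 -> LB T (cpowD U (2/3)) 2 1 ->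
    Bnd T (cpowD U (4/3)) 4 1 -> LB T (cpowD U (4/3)) 4 1 ->
    Bnd T W (-8) rho -> Bnd T X (-4) rho -> Bnd T Y (-4) rho ->
    Cmod (Jfun U W X Y) <= 1/2 -> Bnd T (Jfun U W X Y) (-6) CJ ->
    Bnd T (KWf U W X Y) (-6) CK) ->
  in_ball beta0 kappa rho Z1 Z2 Z3 -> inD beta0 kappa U ->
  (1 + 2 * Rabs CJ + 2 * Rabs CK) ^ 3 <= kappa / (2 * (1 + tan beta0)) ->
  Adm rho CJ (Rpower (Cmod U) (1/3)) U (Z1 U) (Z2 U) (Z3 U) /\ 1 <= Rpower (Cmod U) (1/3) /\ 0 < Cmod U.
Proof.
  intros Hb0 Hb1 Hr Hk HJB HKB HZ HU HR.
  assert (Ha : 0 < tan beta0) by (apply tan_pos; auto).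
  destruct (inD_facts (tan beta0) kappa U Ha Hk HU) as [HNP HmU].
  set (R0 := 1 + 2 * Rabs CJ + 2 * Rabs CK) in *.
  assert (HR0 : 1 <= R0) by (unfold R0; generalize (Rabs_pos CJ) (Rabs_pos CK); lra).
  assert (HU3 : R0 ^ 3 <= Cmod U) by lra.
  assert (HR03 : 0 < R0 ^ 3) by (apply pow_lt; lra).
  set (T := Rpower (Cmod U) (1/3)).
  assert (HT : R0 <= T).
  { rewrite <- (Rpower_cube_root R0) by lra. apply Rle_Rpower_l. lra. lra. }
  assert (HT1 : 1 <= T) by lra.
  assert (Hm : 0 < Cmod U) by lra.
  assert (EU : Cmod U = powerRZ T 3).
  { rewrite <- (Rpower_1 (Cmod U)) at 1 by auto. apply pw'; auto. field. }
  assert (E2 : Cmod (cpowD U (2/3)) = powerRZ T 2) by (rewrite Cmod_cpowD; apply pw'; auto).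
  assert (E4 : Cmod (cpowD U (4/3)) = powerRZ T 4) by (rewrite Cmod_cpowD; apply pw'; auto).
  destruct (ball_bound _ _ _ _ _ _ U HZ HU) as [B1 [B2 B3]].
  assert (BW : Bnd T (Z1 U) (-8) rho) by (apply (Bnd_of_weighted T U (Z1 U) rho 8 (8/3)); auto; apply pw'; auto).
  assert (BX : Bnd T (Z2 U) (-4) rho) by (apply (Bnd_of_weighted T U (Z2 U) rho 4 (4/3)); auto; apply pw'; auto).
  assert (BY : Bnd T (Z3 U) (-4) rho) by (apply (Bnd_of_weighted T U (Z3 U) rho 4 (4/3)); auto; apply pw'; auto).
  assert (BU : Bnd T U 3 1) by (unfold Bnd; rewrite EU; lra).
  assert (LU : LB T U 3 1) by (split; [lra| rewrite EU; lra]).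
  assert (BU2 : Bnd T (cpowD U (2/3)) 2 1) by (unfold Bnd; rewrite E2; lra).
  assert (LU2 : LB T (cpowD U (2/3)) 2 1) by (split; [lra| rewrite E2; lra]).
  assert (BU4 : Bnd T (cpowD U (4/3)) 4 1) by (unfold Bnd; rewrite E4; lra).
  assert (LU4 : LB T (cpowD U (4/3)) 4 1) by (split; [lra| rewrite E4; lra]).
  assert (BJ := HJB T U (Z1 U) (Z2 U) (Z3 U) HT1 BU LU BU2 LU2 BU4 LU4 BW BX BY).
  assert (SJ : Cmod (Jfun U (Z1 U) (Z2 U) (Z3 U)) <= 1/2).
  { apply (Bnd_small T _ (-6) CJ); auto. lia. unfold R0 in HT. generalize (Rabs_pos CK); lra. }
  assert (BK := HKB T U (Z1 U) (Z2 U) (Z3 U) HT1 BU LU BU2 LU2 BU4 LU4 BW BX BY SJ BJ).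
  assert (SK : Cmod (KWf U (Z1 U) (Z2 U) (Z3 U)) <= 1/2).
  { apply (Bnd_small T _ (-6) CK); auto. lia. unfold R0 in HT. generalize (Rabs_pos CJ); lra. }
  split; [|split; auto].
  constructor; auto.
Qed.


Ltac fin HA Cst B C k :=
  apply wnorm_le; let U := fresh "U" in let HU := fresh "HU" in intros U HU;
  let HAd := fresh in let HT1 := fresh in let HUm := fresh in
  destruct (HA U HU) as [HAd [HT1 HUm]];
  unfold eval_on;
  apply Rle_trans with C; [ eapply (final_pt _ _ _ k); [ exact HT1 | apply B; exact HAd | apply pw'; [exact HUm | simpl; field] ] | ];
  apply Rle_trans with (Rabs C); [apply Rle_abs|]; unfold Cst;
  repeat match goal with |- context [Rabs ?x] => generalize (Rabs_pos x); generalize (Rabs x); intros end; lra.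

Theorem lemma5p5 (beta0 rho : R) (Hb0 : 0 < beta0) (Hb1 : beta0 < PI / 2) (Hrho : 0 < rho) :
  exists kappa0 : R, 0 < kappa0 /\
  exists Cst : R, 0 < Cst /\
  forall kappa : R, kappa0 <= kappa ->
  forall Z1 Z2 Z3 : C -> C, in_ball beta0 kappa rho Z1 Z2 Z3 ->
    let nrm nu F := wnorm beta0 kappa nu (eval_on F Z1 Z2 Z3) in
    Rbar_le (nrm (11/3) Rc1) Cst /\
    Rbar_le (nrm (4/3) Rc2) Cst /\
    Rbar_le (nrm (4/3) Rc3) Cst /\
    Rbar_le (nrm 3 (dW Rc1)) Cst /\
    Rbar_le (nrm (7/3) (dX Rc1)) Cst /\
    Rbar_le (nrm (7/3) (dY Rc1)) Cst /\
    Rbar_le (nrm (2/3) (dW Rc2)) Cst /\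
    Rbar_le (nrm 2 (dX Rc2)) Cst /\
    Rbar_le (nrm 2 (dY Rc2)) Cst /\
    Rbar_le (nrm (2/3) (dW Rc3)) Cst /\
    Rbar_le (nrm 2 (dX Rc3)) Cst /\
    Rbar_le (nrm 2 (dY Rc3)) Cst.
Proof.
  destruct (J_bound rho) as [CJ HJB].
  destruct (K_bound rho CJ) as [CK HKB].
  destruct (b_R1 rho CJ) as [C1 B1]. destruct (b_R2 rho CJ) as [C2 B2]. destruct (b_R3 rho CJ) as [C3 B3].
  destruct (b_dWR1 rho CJ) as [C4 B4]. destruct (b_dXR1 rho CJ) as [C5 B5]. destruct (b_dYR1 rho CJ) as [C6 B6].
  destruct (b_dWR2 rho CJ) as [C7 B7]. destruct (b_dXR2 rho CJ) as [C8 B8]. destruct (b_dYR2 rho CJ) as [C9 B9].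
  destruct (b_dWR3 rho CJ) as [C10 B10]. destruct (b_dXR3 rho CJ) as [C11 B11]. destruct (b_dYR3 rho CJ) as [C12 B12].
  assert (Ha : 0 < tan beta0) by (apply tan_pos; auto).
  set (R0 := 1 + 2 * Rabs CJ + 2 * Rabs CK).
  assert (HR0 : 1 <= R0) by (unfold R0; generalize (Rabs_pos CJ) (Rabs_pos CK); lra).
  assert (HR03 : 0 < R0 ^ 3) by (apply pow_lt; lra).
  exists (2 * (1 + tan beta0) * R0 ^ 3). split. { apply Rmult_lt_0_compat; lra. }
  set (Cst := 1 + (Rabs C1 + Rabs C2 + Rabs C3 + Rabs C4 + Rabs C5 + Rabs C6 + Rabs C7 + Rabs C8 + Rabs C9 + Rabs C10 + Rabs C11 + Rabs C12)).
  exists Cst. split.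
  { unfold Cst. generalize (Rabs_pos C1) (Rabs_pos C2) (Rabs_pos C3) (Rabs_pos C4) (Rabs_pos C5) (Rabs_pos C6)
      (Rabs_pos C7) (Rabs_pos C8) (Rabs_pos C9) (Rabs_pos C10) (Rabs_pos C11) (Rabs_pos C12). intros. lra. }
  intros kappa Hk Z1 Z2 Z3 HZ nrm.
  assert (Hkp : 0 < kappa) by (apply Rlt_le_trans with (2 * (1 + tan beta0) * R0 ^ 3); [apply Rmult_lt_0_compat; lra | auto]).
  assert (HRk : R0 ^ 3 <= kappa / (2 * (1 + tan beta0))).
  { apply Rmult_le_reg_r with (2 * (1 + tan beta0)). lra. unfold Rdiv. rewrite Rmult_assoc, Rinv_l by lra. lra. }
  assert (HA : forall U, inD beta0 kappa U -> Adm rho CJ (Rpower (Cmod U) (1/3)) U (Z1 U) (Z2 U) (Z3 U) /\ 1 <= Rpower (Cmod U) (1/3) /\ 0 < Cmod U).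
  { intros U HU. apply (key beta0 rho kappa CJ CK Z1 Z2 Z3 U); auto. }
  assert (AC : forall c, c <= Cst -> True) by auto.
  repeat split; unfold nrm.
  - fin HA Cst B1 C1 (-11)%Z.
  - fin HA Cst B2 C2 (-4)%Z.
  - fin HA Cst B3 C3 (-4)%Z.
  - fin HA Cst B4 C4 (-9)%Z.
  - fin HA Cst B5 C5 (-7)%Z.
  - fin HA Cst B6 C6 (-7)%Z.
  - fin HA Cst B7 C7 (-2)%Z.
  - fin HA Cst B8 C8 (-6)%Z.
  - fin HA Cst B9 C9 (-6)%Z.
  - fin HA Cst B10 C10 (-2)%Z.
  - fin HA Cst B11 C11 (-6)%Z.
  - fin HA Cst B12 C12 (-6)%Z.
Qed.
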